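(* Let $V=\mathbb{C}^2$ and consider the Segre cone $X_3\subset V^{\otimes3}$ of rank one tensors. (1) Let $\mu=(2,1)$ and let $t\in S^{(2,1)}V\subset V^{\otimes3}$ be general. Then $t$ admits four critical binary tensors of rank one on $X_{(2,1)}$. The remaining two critical binary tensors of rank one for $t$ on $X_3$ are $x\otimes y\otimes z$ and $y\otimes x\otimes z$ for some $x,y,z\in V$. If $t$ is real, the common singular value of these two critical points on $X_3\setminus X_{(2,1)}$ is real. (2) Let $\mu=(3)$ and let $t\in S^3V\subset V^{\otimes3}$ be general. Then $t$ admits three critical binary tensors of rank one on $X_{(3)}$. The remaining three critical binary tensors of rank one for $t$ on $X_3$ are $x\otimes x\otimes y$, $x\otimes y\otimes x$ and $y\otimes x\otimes x$ for some $x,y\in V$. If $t$ is real, the common singular value of these three critical points on $X_3\setminus X_{(3)}$ is real.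
   Context: $V=\mathbb{C}^2$ carries the complex bilinear symmetric form $q(x,y)=x_0y_0+x_1y_1$, $q(x)=q(x,x)$, and $V^{\otimes3}$ the induced form $\widetilde q(v_1\otimes v_2\otimes v_3,w_1\otimes w_2\otimes w_3)=\prod q(v_i,w_i)$; real tensors are those with real coordinates. $S^{(2,1)}V=S^2V\otimes V$ is the subspace of $V^{\otimes3}$ of tensors symmetric in the first two factors, $S^3V$ the fully symmetric tensors; $X_{(2,1)}=\{x^2\otimes y\}$ and $X_{(3)}=\{x^3\}$ are the corresponding cones of partially symmetric / symmetric rank one tensors, contained in $X_3=\{x\otimes y\otimes z\}$. A critical binary tensor of rank one for $t$ on a cone $X$ is a nonzero smooth point $z\in X$ with $\widetilde q(t-z,y)=0$ for all $y\in T_zX$. Non-isotropic critical tensors for $t$ on $X_3$ are of the form $\sigma\,x_1\otimes x_2\otimes x_3$ with $q(x_i)=1$ and $\widetilde q(t,\ldots\otimes v\otimes\ldots)=\sigma q(x_i,v)$ (contracting $t$ with the $x_k$, $k\neq i$, and $v$ in slot $i$) for all $i$ and $v\in V$; $\sigma$ is the corresponding singular value. *)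

(* Defs.v *)
From HB Require Import structures.
From mathcomp Require Import all_boot all_order all_algebra.
From mathcomp Require Import complex.
From mathcomp Require Import reals.
From mathcomp Require mpoly.
Set Implicit Arguments. Unset Strict Implicit. Unset Printing Implicit Defensive.
Import Order.TTheory GRing.Theory Num.Theory.
Local Open Scope ring_scope.

Section Tensors.
Variable R : realType.
Local Notation C := (R[i]).

Definition vec := 'I_2 -> C.
(* tensors of V^{(x)3}, coordinates w.r.t. e_i (x) e_j (x) e_k, indexed by ((i,j),k) *)
Definition tensor := {ffun 'I_2 * 'I_2 * 'I_2 -> C}.

Definition q (x y : vec) : C := \sum_(i < 2) x i * y i.

(* the induced form q~ on V^{(x)3}: q~(v1(x)v2(x)v3, w1(x)w2(x)w3) = prod q(vi,wi),
   i.e. the standard coordinatewise bilinear form *)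
Definition qt (t s : tensor) : C := \sum_(p : 'I_2 * 'I_2 * 'I_2) t p * s p.

Definition tprod (x y z : vec) : tensor := [ffun p => x p.1.1 * y p.1.2 * z p.2].

Definition tscale (c : C) (t : tensor) : tensor := [ffun p => c * t p].

Definition X3 (z : tensor) : Prop := exists x y w, z = tprod x y w.
Definition T3 (z u : tensor) : Prop :=
  exists x y w, z = tprod x y w /\
    exists a b c, u = tprod a y w + tprod x b w + tprod x y c.

Definition X21 (z : tensor) : Prop := exists x y, z = tprod x x y.
Definition T21 (z u : tensor) : Prop :=
  exists x y, z = tprod x x y /\
    exists a b, u = tprod a x y + tprod x a y + tprod x x b.

Definition Xsym3 (z : tensor) : Prop := exists x, z = tprod x x x.
Definition Tsym3 (z u : tensor) : Prop :=
  exists x, z = tprod x x x /\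
    exists a, u = tprod a x x + tprod x a x + tprod x x a.

(* critical (binary) tensor of rank one for t on the cone X with tangent spaces T:
   a nonzero point z of X (all nonzero points of these cones are smooth) with
   q~(t - z, y) = 0 for all y in T_z X *)
Definition critical (X : tensor -> Prop) (T : tensor -> tensor -> Prop)
  (t z : tensor) : Prop :=
  z != 0 /\ X z /\ forall u, T z u -> qt (t - z) u = 0.

Definition singular_value (t z : tensor) (sigma : C) : Prop :=
  exists x1 x2 x3 : vec,
    [/\ q x1 x1 = 1, q x2 x2 = 1, q x3 x3 = 1,
        z = tscale sigma (tprod x1 x2 x3) &
        forall v : vec,
          [/\ qt t (tprod v x2 x3) = sigma * q x1 v,
              qt t (tprod x1 v x3) = sigma * q x2 v &
              qt t (tprod x1 x2 v) = sigma * q x3 v]].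

Definition S21 (t : tensor) : Prop := forall i j k, t (i, j, k) = t (j, i, k).
Definition S3 (t : tensor) : Prop :=
  forall i j k, t (i, j, k) = t (j, i, k) /\ t (i, j, k) = t (i, k, j).

Definition real_tensor (t : tensor) : Prop := forall p, t p \is Num.real.

(* coordinates of a tensor as a point of C^8: index 4i+2j+k *)
Definition coords (t : tensor) : 'I_8 -> C :=
  fun n => t (inord (n %/ 4), inord ((n %/ 2) %% 2), inord (n %% 2)).

(* "a general t in the subspace S satisfies P": P holds on a nonempty Zariski
   open subset of S, namely where some polynomial not vanishing identically on S
   does not vanish *)
Definition general_in (S : tensor -> Prop) (P : tensor -> Prop) : Prop :=
  exists f : mpoly.mpoly 8 C,
    (exists t0, S t0 /\ mpoly.meval (coords t0) f != 0) /\
    forall t, S t -> mpoly.meval (coords t) f != 0 -> P t.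

End Tensors.

(* Main.v *)
Require Import Defs.
From HB Require Import structures.
From mathcomp Require Import all_boot all_order all_algebra.
From mathcomp Require Import complex.
From mathcomp Require Import reals.
From mathcomp Require Import mpoly.
From mathcomp Require Import separable.
From mathcomp Require Import ring.
From Stdlib Require Import FunctionalExtensionality.
Set Implicit Arguments. Unset Strict Implicit. Unset Printing Implicit Defensive.
Import Order.TTheory GRing.Theory Num.Theory.
Local Open Scope ring_scope.

Section P0.
Variable R : realType.
Local Notation C := (R[i]).
Local Notation vec := (vec R).
Local Notation tensor := (tensor R).

Definition i0 : 'I_2 := ord0.
Definition i1 : 'I_2 := ord_max.

Lemma sum2 (A : nmodType) (F : 'I_2 -> A) : \sum_(i < 2) F i = F i0 + F i1.
Proof. by rewrite big_ord_recl big_ord1; congr (_ + F _); apply: val_inj. Qed.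

Lemma sum8 (A : nmodType) (F : 'I_2 * 'I_2 * 'I_2 -> A) :
  \sum_p F p = F (i0,i0,i0) + F (i0,i0,i1) + F (i0,i1,i0) + F (i0,i1,i1)
             + F (i1,i0,i0) + F (i1,i0,i1) + F (i1,i1,i0) + F (i1,i1,i1).
Proof.
transitivity (\sum_i \sum_j \sum_k F (i, j, k)); last by rewrite !sum2 !addrA.
rewrite pair_bigA pair_bigA /=; by apply: eq_bigr => [[[i j] k]] _.
Qed.

Lemma ord2P (i : 'I_2) : i = i0 \/ i = i1.
Proof. case: i => [[|[|n]] Hi] //; [left|right]; exact: val_inj. Qed.

Lemma sub_ffun (t z : tensor) p : (t - z) p = t p - z p.
Proof. by rewrite !ffunE. Qed.

End P0.

Ltac fsc := field; try (repeat (apply/andP; split)); try assumption.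

Section P1.
Variable R : realType.
Local Notation C := (R[i]).
Local Notation vec := (vec R).
Local Notation tensor := (tensor R).
Implicit Types (t z u : tensor) (x y w a b c : vec).

Definition mk2 (a b : C) : vec := fun i => if nat_of_ord i == 0%N then a else b.

Lemma vecE x : x = mk2 (x i0) (x i1).
Proof. apply: functional_extensionality => i; case: (ord2P i) => ->; done. Qed.

Lemma vec_eq x y : x i0 = y i0 -> x i1 = y i1 -> x = y.
Proof. by move=> h0 h1; rewrite (vecE x) (vecE y) h0 h1. Qed.

Definition tc t a b c := qt t (tprod a b c).
Definition vscale (k : C) x : vec := fun i => k * x i.

Lemma qE x y : q x y = x i0 * y i0 + x i1 * y i1.
Proof. by rewrite /q sum2. Qed.

Lemma tcE t a b c : tc t a b c =
    t (i0,i0,i0) * a i0 * b i0 * c i0 + t (i0,i0,i1) * a i0 * b i0 * c i1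
  + t (i0,i1,i0) * a i0 * b i1 * c i0 + t (i0,i1,i1) * a i0 * b i1 * c i1
  + t (i1,i0,i0) * a i1 * b i0 * c i0 + t (i1,i0,i1) * a i1 * b i0 * c i1
  + t (i1,i1,i0) * a i1 * b i1 * c i0 + t (i1,i1,i1) * a i1 * b i1 * c i1.
Proof. rewrite /tc /qt sum8 /tprod !ffunE /=; ring. Qed.

Lemma tprodE x y w i j k : tprod x y w (i,j,k) = x i * y j * w k.
Proof. by rewrite /tprod ffunE. Qed.

Lemma qt_tprod x y w a b c : qt (tprod x y w) (tprod a b c) = q x a * q y b * q w c.
Proof. rewrite /qt sum8 !tprodE !qE; ring. Qed.

Lemma qt_tangent t x y w a b c :
  qt (t - tprod x y w) (tprod a y w + tprod x b w + tprod x y c) =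
    (tc t a y w - q x a * q y y * q w w) + (tc t x b w - q x x * q y b * q w w)
  + (tc t x y c - q x x * q y y * q w c).
Proof.
rewrite !tcE !qE /qt sum8 !ffunE /=; ring.
Qed.

Lemma tensor_eq t z : (forall i j k, t (i,j,k) = z (i,j,k)) -> t = z.
Proof. by move=> h; apply/ffunP => [[[i j] k]]. Qed.


Lemma tprod_nz x y w : tprod x y w != 0 -> exists i j k, x i * y j * w k != 0.
Proof.
move=> h; case: (boolP [exists i, exists j, exists k, x i * y j * w k != 0]).
  by move=> /existsP[i /existsP[j /existsP[k hk]]]; exists i, j, k.
rewrite negb_exists => /forallP H; move/negP: h; case.
apply/eqP/tensor_eq => i j k; rewrite tprodE ffunE.
move: (H i); rewrite negb_exists => /forallP /(_ j); rewrite negb_exists => /forallP /(_ k).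
by rewrite negbK => /eqP.
Qed.

Lemma decomp x y w x' y' w' : tprod x y w = tprod x' y' w' -> tprod x y w != 0 ->
  exists al be ga, [/\ x' = vscale al x, y' = vscale be y, w' = vscale ga w & al * be * ga = 1].
Proof.
move=> E nz; have [i [j [k hn]]] := tprod_nz nz.
have e : forall (a b c : 'I_2), x a * y b * w c = x' a * y' b * w' c.
  by move=> a b c; rewrite -!tprodE E.
have hn' : x' i * y' j * w' k != 0 by rewrite -e.
move: (hn) (hn'); rewrite !mulf_eq0 !negb_or => /andP[/andP[xi yj] wk] /andP[/andP[xi' yj'] wk'].
exists ((y j * w k) / (y' j * w' k)), ((x i * w k) / (x' i * w' k)), ((x i * y j) / (x' i * y' j)).
split.
- apply: functional_extensionality => n; rewrite /vscale.
  transitivity ((x n * y j * w k) / (y' j * w' k)); last by fsc.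
  by rewrite e; fsc.
- apply: functional_extensionality => n; rewrite /vscale.
  transitivity ((x i * y n * w k) / (x' i * w' k)); last by fsc.
  by rewrite e; fsc.
- apply: functional_extensionality => n; rewrite /vscale.
  transitivity ((x i * y j * w n) / (x' i * y' j)); last by fsc.
  by rewrite e; fsc.
transitivity ((x i * y j * w k) ^+ 2 / (x' i * y' j * w' k) ^+ 2); first by fsc.
by rewrite e divff // sqrf_eq0.
Qed.

Definition Ecrit t x y w :=
  [/\ forall a, tc t a y w = q x a * q y y * q w w,
      forall b, tc t x b w = q x x * q y b * q w w &
      forall c, tc t x y c = q x x * q y y * q w c].

Lemma tc_scale t x y w (al be ga : C) :
  tc t (vscale al x) (vscale be y) (vscale ga w) = al * be * ga * tc t x y w.
Proof. rewrite !tcE /vscale; ring. Qed.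

Lemma q_scale x y (al be : C) : q (vscale al x) (vscale be y) = al * be * q x y.
Proof. rewrite !qE /vscale; ring. Qed.

Lemma vscale1 x : vscale 1 x = x.
Proof. by apply: functional_extensionality => n; rewrite /vscale mul1r. Qed.

Lemma Ecrit_scale t x y w al be ga : Ecrit t x y w -> al * be * ga = 1 ->
  Ecrit t (vscale al x) (vscale be y) (vscale ga w).
Proof.
move=> [h1 h2 h3] hp; split.
- move=> a; rewrite -(vscale1 a) tc_scale h1 !q_scale.
  transitivity (be * ga * (al * be * ga) * (q x a * q y y * q w w)); first by rewrite hp; ring.
  ring.
- move=> a; rewrite -(vscale1 a) tc_scale h2 !q_scale.
  transitivity (al * ga * (al * be * ga) * (q x x * q y a * q w w)); first by rewrite hp; ring.
  ring.
- move=> a; rewrite -(vscale1 a) tc_scale h3 !q_scale.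
  transitivity (al * be * (al * be * ga) * (q x x * q y y * q w a)); first by rewrite hp; ring.
  ring.
Qed.

Lemma Ecrit_any t x y w x' y' w' : tprod x y w = tprod x' y' w' -> tprod x y w != 0 ->
  Ecrit t x y w -> Ecrit t x' y' w'.
Proof.
move=> E nz h; have [al [be [ga [-> -> -> hp]]]] := decomp E nz.
exact: Ecrit_scale.
Qed.

Definition v0 : vec := fun _ => 0.

Lemma tc0l t y w : tc t v0 y w = 0. Proof. rewrite tcE /v0; ring. Qed.
Lemma tc0m t x w : tc t x v0 w = 0. Proof. rewrite tcE /v0; ring. Qed.
Lemma tc0r t x y : tc t x y v0 = 0. Proof. rewrite tcE /v0; ring. Qed.
Lemma q0r x : q x v0 = 0. Proof. rewrite qE /v0; ring. Qed.

Lemma crit3P t x y w :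
  critical (@X3 R) (@T3 R) t (tprod x y w) <-> tprod x y w != 0 /\ Ecrit t x y w.
Proof.
split.
- move=> [nz [_ H]]; split => //.
  have H' : forall a b c, (tc t a y w - q x a * q y y * q w w) + (tc t x b w - q x x * q y b * q w w)
      + (tc t x y c - q x x * q y y * q w c) = 0.
    move=> a b c; rewrite -qt_tangent; apply: H; exists x, y, w; split => //.
    by exists a, b, c.
  split.
  + move=> a; apply/eqP; rewrite -subr_eq0; apply/eqP.
    by have := H' a v0 v0; rewrite tc0m tc0r !q0r; move=> <-; ring.
  + move=> b; apply/eqP; rewrite -subr_eq0; apply/eqP.
    by have := H' v0 b v0; rewrite tc0l tc0r !q0r; move=> <-; ring.
  + move=> c; apply/eqP; rewrite -subr_eq0; apply/eqP.
    by have := H' v0 v0 c; rewrite tc0l tc0m !q0r; move=> <-; ring.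
- move=> [nz E]; split => //; split; first by exists x, y, w.
  move=> u [x' [y' [w' [Ez [a [b [c ->]]]]]]].
  have [h1 h2 h3] := Ecrit_any Ez nz E.
  by rewrite Ez qt_tangent h1 h2 h3 !subrr !addr0.
Qed.

Lemma tc_sym12 t (hS : S21 t) a b c : tc t a b c = tc t b a c.
Proof. rewrite !tcE (hS i1 i0 i0) (hS i1 i0 i1); ring. Qed.

Lemma S3_S21 t : S3 t -> S21 t.
Proof. by move=> h i j k; case: (h i j k). Qed.

Lemma tc_sym23 t (hS : S3 t) a b c : tc t a b c = tc t a c b.
Proof.
have e1 : t (i0,i1,i0) = t (i0,i0,i1) by case: (hS i0 i1 i0).
have e2 : t (i1,i0,i0) = t (i0,i0,i1) by case: (hS i1 i0 i0) => -> _.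
have e3 : t (i1,i0,i1) = t (i0,i1,i1) by case: (hS i1 i0 i1).
have e4 : t (i1,i1,i0) = t (i0,i1,i1) by case: (hS i1 i1 i0) => _ ->.
rewrite !tcE e1 e2 e3 e4; ring.
Qed.

Lemma two_neq0 : (2 : C) != 0. Proof. by rewrite pnatr_eq0. Qed.
Lemma three_neq0 : (3 : C) != 0. Proof. by rewrite pnatr_eq0. Qed.

Lemma crit21P t (hS : S21 t) x w :
  critical (@X21 R) (@T21 R) t (tprod x x w) <-> tprod x x w != 0 /\ Ecrit t x x w.
Proof.
split.
- move=> [nz [_ H]]; split => //.
  have H' : forall a b, (tc t a x w - q x a * q x x * q w w) + (tc t x a w - q x x * q x a * q w w)
      + (tc t x x b - q x x * q x x * q w b) = 0.
    move=> a b; rewrite -qt_tangent; apply: H; exists x, w; split => //.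
    by exists a, b.
  have h1 : forall a, tc t a x w = q x a * q x x * q w w.
    move=> a; have := H' a v0; rewrite tc0r q0r (tc_sym12 hS x a w) => e.
    apply/eqP; rewrite -subr_eq0; apply/eqP.
    have : 2 * (tc t a x w - q x a * q x x * q w w) = 0 by rewrite -e; ring.
    by move/eqP; rewrite mulf_eq0 (negPf two_neq0) /= => /eqP.
  split => //.
  + by move=> b; rewrite -tc_sym12 // h1; ring.
  + move=> c; apply/eqP; rewrite -subr_eq0; apply/eqP.
    have := H' v0 c; rewrite tc0l tc0m !q0r => <-; ring.
- move=> [nz E]; split => //; split; first by exists x, w.
  move=> u [x' [y' [Ez [a [b ->]]]]].
  have [h1 h2 h3] := Ecrit_any Ez nz E.
  by rewrite Ez qt_tangent h1 h2 h3 !subrr !addr0.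
Qed.

Lemma critsymP t (hS : S3 t) x :
  critical (@Xsym3 R) (@Tsym3 R) t (tprod x x x) <-> tprod x x x != 0 /\ Ecrit t x x x.
Proof.
have hS2 := S3_S21 hS.
split.
- move=> [nz [_ H]]; split => //.
  have H' : forall a, (tc t a x x - q x a * q x x * q x x) + (tc t x a x - q x x * q x a * q x x)
      + (tc t x x a - q x x * q x x * q x a) = 0.
    move=> a; rewrite -qt_tangent; apply: H; exists x; split => //.
    by exists a.
  have h1 : forall a, tc t a x x = q x a * q x x * q x x.
    move=> a; have := H' a; rewrite (tc_sym12 hS2 x a x) (tc_sym23 hS x x a) (tc_sym12 hS2 x a x) => e.
    apply/eqP; rewrite -subr_eq0; apply/eqP.
    have : 3 * (tc t a x x - q x a * q x x * q x x) = 0 by rewrite -e; ring.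
    by move/eqP; rewrite mulf_eq0 (negPf three_neq0) /= => /eqP.
  split => //.
  + by move=> b; rewrite -tc_sym12 // h1; ring.
  + by move=> c; rewrite -tc_sym23 // -tc_sym12 // h1; ring.
- move=> [nz E]; split => //; split; first by exists x.
  move=> u [x' [Ez [a ->]]].
  have [h1 h2 h3] := Ecrit_any Ez nz E.
  by rewrite Ez qt_tangent h1 h2 h3 !subrr !addr0.
Qed.

End P1.

Section Gen.
Variable A : comNzRingType.
Definition m2 (a b : A) : 'I_2 -> A := fun i => if nat_of_ord i == 0%N then a else b.
Definition sgn (i : 'I_2) : A := if nat_of_ord i == 0%N then -1 else 1.
Definition perp (x : 'I_2 -> A) := m2 (- x i1) (x i0).
Variable T : 'I_2 -> 'I_2 -> 'I_2 -> A.
Definition Lg k := T i0 i0 k + T i1 i1 k.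
Definition wsg := m2 (- Lg i1) (Lg i0).
Definition Mg i j := \sum_(k < 2) T i j k * wsg k.
Definition sg := Mg i0 i0 ^+ 2 + Mg i0 i1 ^+ 2.
Definition ksg := Lg i0 ^+ 2 + Lg i1 ^+ 2.
Definition pPg : {poly A} := \sum_(i < 2) \sum_(j < 2) \sum_(k < 2) \sum_(a < 2) \sum_(b < 2)
   (sgn i * T i j k * T a b k) *: 'X^((1 - i) + j + a + b).
Definition pQg : {poly A} := \sum_(i < 2) \sum_(j < 2) \sum_(k < 2) \sum_(l < 2)
   (T i j k * Mg j l * Lg k) *: 'X^(i + l).
Definition pVg : {poly A} := \sum_(a < 2) \sum_(b < 2) T a b i0 *: 'X^(a + b).
Definition pEg : {poly A} := \sum_(i < 2) \sum_(l < 2) (sgn i * Mg i l) *: 'X^((1 - i) + l).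
Definition pIg : {poly A} := 1 + 'X^2.
Definition Cwg := \sum_(i < 2) \sum_(j < 2) \sum_(k < 2) T i j k * wsg i * wsg j * perp wsg k.

Definition Pform (x : 'I_2 -> A) := \sum_(i < 2) \sum_(j < 2) \sum_(k < 2) \sum_(a < 2) \sum_(b < 2)
   T i j k * perp x i * x j * (T a b k * x a * x b).
Definition Qform (x : 'I_2 -> A) := \sum_(i < 2) \sum_(j < 2) \sum_(k < 2) \sum_(l < 2)
   T i j k * x i * (Mg j l * x l) * Lg k.
Definition Vform (x : 'I_2 -> A) := \sum_(a < 2) \sum_(b < 2) T a b i0 * x a * x b.
Definition Eform (x : 'I_2 -> A) := \sum_(i < 2) \sum_(l < 2) perp x i * Mg i l * x l.

Lemma pPg_eval u : pPg.[u] = Pform (m2 1 u).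
Proof.
rewrite /pPg /Pform !horner_sum; apply: eq_bigr => i _; rewrite !horner_sum; apply: eq_bigr => j _.
rewrite !horner_sum; apply: eq_bigr => k _; rewrite !horner_sum; apply: eq_bigr => a _.
rewrite !horner_sum; apply: eq_bigr => b _; rewrite hornerZ hornerXn.
by case: (ord2P i) => ->; case: (ord2P j) => ->; case: (ord2P a) => ->; case: (ord2P b) => ->;
  rewrite /perp /m2 /sgn /=; ring.
Qed.

Ltac cases4 i j a b := case: (ord2P i) => ->; case: (ord2P j) => ->; case: (ord2P a) => ->; case: (ord2P b) => ->.

Lemma pQg_eval u : pQg.[u] = Qform (m2 1 u).
Proof.
rewrite /pQg /Qform !horner_sum; apply: eq_bigr => i _; rewrite !horner_sum; apply: eq_bigr => j _.
rewrite !horner_sum; apply: eq_bigr => k _; rewrite !horner_sum; apply: eq_bigr => l _.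
rewrite hornerZ hornerXn.
by case: (ord2P i) => ->; case: (ord2P l) => ->; rewrite /m2 /=; ring.
Qed.

Lemma pVg_eval u : pVg.[u] = Vform (m2 1 u).
Proof.
rewrite /pVg /Vform !horner_sum; apply: eq_bigr => a _; rewrite !horner_sum; apply: eq_bigr => b _.
rewrite hornerZ hornerXn.
by case: (ord2P a) => ->; case: (ord2P b) => ->; rewrite /m2 /=; ring.
Qed.

Lemma pEg_eval u : pEg.[u] = Eform (m2 1 u).
Proof.
rewrite /pEg /Eform !horner_sum; apply: eq_bigr => i _; rewrite !horner_sum; apply: eq_bigr => l _.
rewrite hornerZ hornerXn.
by case: (ord2P i) => ->; case: (ord2P l) => ->; rewrite /perp /m2 /sgn /=; ring.
Qed.

Lemma pIg_eval u : pIg.[u] = 1 + u ^+ 2.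
Proof. by rewrite /pIg hornerD hornerC hornerXn. Qed.

Lemma pPg_coef4 : pPg`_4 = Pform (m2 0 1).
Proof.
rewrite /pPg /Pform !coef_sum; apply: eq_bigr => i _; rewrite !coef_sum; apply: eq_bigr => j _.
rewrite !coef_sum; apply: eq_bigr => k _; rewrite !coef_sum; apply: eq_bigr => a _.
rewrite !coef_sum; apply: eq_bigr => b _; rewrite coefZ coefXn.
by case: (ord2P i) => ->; case: (ord2P j) => ->; case: (ord2P a) => ->; case: (ord2P b) => ->;
  rewrite /perp /m2 /sgn /=; ring.
Qed.

Lemma pQg_coef2 : pQg`_2 = Qform (m2 0 1).
Proof.
rewrite /pQg /Qform !coef_sum; apply: eq_bigr => i _; rewrite !coef_sum; apply: eq_bigr => j _.
rewrite !coef_sum; apply: eq_bigr => k _; rewrite !coef_sum; apply: eq_bigr => l _.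
rewrite coefZ coefXn.
by case: (ord2P i) => ->; case: (ord2P l) => ->; rewrite /m2 /=; ring.
Qed.

Lemma pVg_coef2 : pVg`_2 = T i1 i1 i0.
Proof.
rewrite /pVg !coef_sum sum2 !coef_sum !sum2 !coefZ !coefXn /=; ring.
Qed.

Lemma pEg_coef2 : pEg`_2 = - Mg i0 i1.
Proof.
rewrite /pEg !coef_sum sum2 !coef_sum !sum2 !coefZ !coefXn /sgn /=; ring.
Qed.

Lemma size_sum2 (F : 'I_2 -> {poly A}) n : (forall i : 'I_2, (size (F i) <= n)%N) -> (size (\sum_(i < 2) F i)%R <= n)%N.
Proof. by move=> h; rewrite sum2 (leq_trans (size_polyD _ _)) // geq_max !h. Qed.

Lemma size_mono (c : A) m n : (m < n)%N -> (size (c *: 'X^m) <= n)%N.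
Proof. by move=> h; rewrite (leq_trans (size_scale_leq _ _)) // size_polyXn. Qed.

Lemma size_pPg : (size pPg <= 5)%N.
Proof.
apply: size_sum2 => i; apply: size_sum2 => j; apply: size_sum2 => k; apply: size_sum2 => a;
apply: size_sum2 => b; apply: size_mono.
by case: (ord2P i) => ->; case: (ord2P j) => ->; case: (ord2P a) => ->; case: (ord2P b) => ->.
Qed.

Lemma size_pQg : (size pQg <= 3)%N.
Proof.
apply: size_sum2 => i; apply: size_sum2 => j; apply: size_sum2 => k; apply: size_sum2 => l;
apply: size_mono.
by case: (ord2P i) => ->; case: (ord2P l) => ->.
Qed.

Lemma size_pVg : (size pVg <= 3)%N.
Proof.
apply: size_sum2 => i; apply: size_sum2 => l; apply: size_mono.
by case: (ord2P i) => ->; case: (ord2P l) => ->.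
Qed.

Lemma size_pEg : (size pEg <= 3)%N.
Proof.
apply: size_sum2 => i; apply: size_sum2 => l; apply: size_mono.
by case: (ord2P i) => ->; case: (ord2P l) => ->.
Qed.

Definition vsc (l : A) (x : 'I_2 -> A) : 'I_2 -> A := fun n => l * x n.

Lemma Pform_scale l x : Pform (vsc l x) = l ^+ 4 * Pform x.
Proof.
rewrite /Pform mulr_sumr; apply: eq_bigr => i _; rewrite mulr_sumr; apply: eq_bigr => j _.
rewrite mulr_sumr; apply: eq_bigr => k _; rewrite mulr_sumr; apply: eq_bigr => a _.
rewrite mulr_sumr; apply: eq_bigr => b _.
by case: (ord2P i) => ->; rewrite /perp /vsc /m2 /=; ring.
Qed.

Lemma Qform_scale l x : Qform (vsc l x) = l ^+ 2 * Qform x.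
Proof.
rewrite /Qform mulr_sumr; apply: eq_bigr => i _; rewrite mulr_sumr; apply: eq_bigr => j _.
rewrite mulr_sumr; apply: eq_bigr => k _; rewrite mulr_sumr; apply: eq_bigr => a _.
by rewrite /vsc; ring.
Qed.

Lemma Eform_scale l x : Eform (vsc l x) = l ^+ 2 * Eform x.
Proof.
rewrite /Eform mulr_sumr; apply: eq_bigr => i _; rewrite mulr_sumr; apply: eq_bigr => j _.
by case: (ord2P i) => ->; rewrite /perp /vsc /m2 /=; ring.
Qed.

Lemma Vform_scale l x : Vform (vsc l x) = l ^+ 2 * Vform x.
Proof.
rewrite /Vform mulr_sumr; apply: eq_bigr => i _; rewrite mulr_sumr; apply: eq_bigr => j _.
by rewrite /vsc; ring.
Qed.
End Gen.

Section Morph.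
Variables (A B : comNzRingType) (f : {rmorphism A -> B}).
Variable T : 'I_2 -> 'I_2 -> 'I_2 -> A.
Local Notation Tf := (fun i j k => f (T i j k)).

Lemma sgn_morph i : f (sgn A i) = sgn B i.
Proof. by rewrite /sgn; case: ifP => _; rewrite ?rmorphN rmorph1. Qed.

Lemma Lg_morph k : f (Lg T k) = Lg Tf k.
Proof. by rewrite /Lg rmorphD. Qed.

Lemma wsg_morph k : f (wsg T k) = wsg Tf k.
Proof. by rewrite /wsg /m2; case: ifP => _; rewrite ?rmorphN Lg_morph. Qed.

Lemma Mg_morph i j : f (Mg T i j) = Mg Tf i j.
Proof. rewrite /Mg rmorph_sum; apply: eq_bigr => k _; by rewrite rmorphM wsg_morph. Qed.

Lemma sg_morph : f (sg T) = sg Tf.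
Proof. by rewrite /sg rmorphD !rmorphXn !Mg_morph. Qed.

Lemma ksg_morph : f (ksg T) = ksg Tf.
Proof. by rewrite /ksg rmorphD !rmorphXn !Lg_morph. Qed.

Lemma perp_morph (v : 'I_2 -> A) k : f (perp v k) = perp (fun n => f (v n)) k.
Proof. by case: (ord2P k) => ->; rewrite /perp /m2 /= ?rmorphN. Qed.

Lemma Cwg_morph : f (Cwg T) = Cwg Tf.
Proof.
rewrite /Cwg rmorph_sum; apply: eq_bigr => i _; rewrite rmorph_sum; apply: eq_bigr => j _.
rewrite rmorph_sum; apply: eq_bigr => k _; rewrite !rmorphM !wsg_morph perp_morph.
congr (_ * perp _ _); apply: functional_extensionality => n; exact: wsg_morph.
Qed.

Lemma pPg_morph : map_poly f (pPg T) = pPg Tf.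
Proof.
rewrite /pPg rmorph_sum; apply: eq_bigr => i _; rewrite rmorph_sum; apply: eq_bigr => j _.
rewrite rmorph_sum; apply: eq_bigr => k _; rewrite rmorph_sum; apply: eq_bigr => a _.
rewrite rmorph_sum; apply: eq_bigr => b _.
by rewrite /= map_polyZ map_polyXn !rmorphM sgn_morph.
Qed.

Lemma pQg_morph : map_poly f (pQg T) = pQg Tf.
Proof.
rewrite /pQg rmorph_sum; apply: eq_bigr => i _; rewrite rmorph_sum; apply: eq_bigr => j _.
rewrite rmorph_sum; apply: eq_bigr => k _; rewrite rmorph_sum; apply: eq_bigr => a _.
by rewrite /= map_polyZ map_polyXn !rmorphM Mg_morph Lg_morph.
Qed.

Lemma pVg_morph : map_poly f (pVg T) = pVg Tf.
Proof.
rewrite /pVg rmorph_sum; apply: eq_bigr => i _; rewrite rmorph_sum; apply: eq_bigr => j _.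
by rewrite /= map_polyZ map_polyXn.
Qed.

Lemma pEg_morph : map_poly f (pEg T) = pEg Tf.
Proof.
rewrite /pEg rmorph_sum; apply: eq_bigr => i _; rewrite rmorph_sum; apply: eq_bigr => j _.
by rewrite /= map_polyZ map_polyXn rmorphM sgn_morph Mg_morph.
Qed.

Lemma pIg_morph : map_poly f (pIg A) = pIg B.
Proof. by rewrite /pIg rmorphD rmorph1 /= map_polyXn. Qed.
End Morph.


Lemma map_resultant_gen (aR rR : nzRingType) (f : {rmorphism aR -> rR}) (p q : {poly aR}) :
    f (lead_coef p) != 0 -> f (lead_coef q) != 0 ->
  f (resultant p q) = resultant (map_poly f p) (map_poly f q).
Proof.
move=> nz_fp nz_fq; rewrite /resultant /Sylvester_mx !size_map_poly_id0 //.
rewrite -det_map_mx /= map_col_mx; congr (\det (col_mx _ _));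
  by apply: map_lin1_mx => v; rewrite map_poly_rV rmorphM /= map_rVpoly.
Qed.

Lemma lead_of_coef (A : nzRingType) (p : {poly A}) n :
  (size p <= n.+1)%N -> p`_n != 0 -> lead_coef p = p`_n /\ size p = n.+1.
Proof.
move=> hs hn.
have hs' : (n < size p)%N.
  rewrite ltnNge; apply/negP => /leq_sizeP /(_ n (leqnn n)) h; by rewrite h eqxx in hn.
have e : size p = n.+1 by apply/eqP; rewrite eqn_leq hs hs'.
by rewrite lead_coefE e.
Qed.

Lemma f_lead (A B : nzRingType) (f : {rmorphism A -> B}) (p : {poly A}) n :
  (size p <= n.+1)%N -> f p`_n != 0 -> f (lead_coef p) != 0.
Proof.
move=> hs hn; have hn' : p`_n != 0 by apply: contraNneq hn => ->; rewrite rmorph0.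
by have [-> _] := lead_of_coef hs hn'.
Qed.

Lemma res_noroot (A : comNzRingType) (p q : {poly A}) u :
  resultant p q != 0 -> (1 < size p)%N -> (1 < size q)%N -> root p u -> root q u -> False.
Proof.
move=> hr hp hq rp rq; have [[u1 u2] /= _ e] := resultant_in_ideal hp hq.
move: (congr1 (fun r => r.[u]) e); rewrite hornerC hornerD !hornerM (rootP rp) (rootP rq).
by rewrite !mulr0 addr0 => h; rewrite h eqxx in hr.
Qed.

Lemma res_ne0 (F : closedFieldType) (p q : {poly F}) :
  (forall u, root p u -> ~~ root q u) -> resultant p q != 0.
Proof.
move=> h; rewrite resultant_eq0 -leqNgt.
case: (ltnP 1 (size (gcdp p q))) => // hs.
have : size (gcdp p q) != 1%N by rewrite neq_ltn hs orbT.
move/closed_rootP => [u ru].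
have rp := root_dvdp (dvdp_gcdl p q) ru; have rq := root_dvdp (dvdp_gcdr p q) ru.
by move: (h u rp); rewrite rq.
Qed.

Lemma roots_uniq (F : closedFieldType) (p : {poly F}) :
  p != 0 -> resultant p p^`() != 0 ->
  exists rs : seq F, [/\ uniq rs, size rs = (size p).-1 & forall u, root p u = (u \in rs)].
Proof.
move=> p0 hr; have [rs e] := closed_field_poly_normal p.
have l0 : lead_coef p != 0 by rewrite lead_coef_eq0.
exists rs; split.
- have sep : separable_poly p.
    rewrite unlock /coprimep; move: hr; rewrite resultant_eq0 -leqNgt => h.
    rewrite eqn_leq h /= lt0n size_poly_eq0 gcdp_eq0 negb_and p0 //.
  move: sep; rewrite (eqp_separable (q := \prod_(z <- rs) ('X - z%:P))).
    by rewrite separable_prod_XsubC.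
  by rewrite {1}e eqp_scale.
- by rewrite {1}e size_scale // size_prod_XsubC.
- by move=> u; rewrite {1}e rootZ // root_prod_XsubC.
Qed.

Lemma horner3 (A : comNzRingType) (p : {poly A}) u : (size p <= 3)%N ->
  p.[u] = p`_0 + p`_1 * u + p`_2 * u ^+ 2.
Proof. by move=> h; rewrite (horner_coef_wide _ h) !big_ord_recr big_ord0 /= add0r expr0 expr1 mulr1. Qed.

Section P4.
Variable R : realType.
Local Notation C := (R[i]).
Local Notation vec := (vec R).
Local Notation tensor := (tensor R).
Implicit Types (z u : tensor) (x y w a b c v : vec).

Variable t : tensor.
Hypothesis hS : S21 t.

Definition tt : 'I_2 -> 'I_2 -> 'I_2 -> C := fun i j k => t (i, j, k).
Definition e0 : vec := m2 1 0.
Definition e1 : vec := m2 0 1.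
Definition Lv : vec := Lg tt.
Definition wsv : vec := wsg tt.
Definition Mx x : vec := fun j => \sum_(l < 2) Mg tt j l * x l.
Definition sv : C := sg tt.
Definition ksv : C := ksg tt.
Definition vv x : vec := fun k => \sum_(a < 2) \sum_(b < 2) t (a, b, k) * x a * x b.
Definition det2 x y := x i0 * y i1 - x i1 * y i0.

Let s100 := hS i1 i0 i0.
Let s101 := hS i1 i0 i1.

Ltac ex := rewrite ?tcE ?qE /det2 /Mx /vv /sv /ksv /Lv /wsv /sg /ksg /Mg /wsg /Lg /perp /m2 /tt /e0 /e1 /vsc /vscale ?sum2 /=;
  rewrite ?s100 ?s101.

Lemma I2 x : Pform tt x = tc t (perp x) x (vv x).
Proof. rewrite /Pform; ex; ring. Qed.

Lemma I3 x a v : q x x * tc t a x v = q x a * tc t x x v + q (perp x) a * tc t (perp x) x v.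
Proof. ex; ring. Qed.

Lemma I4 x v : tc t x x v = q (vv x) v.
Proof. ex; ring. Qed.

Lemma I5 x y w : q Lv w * det2 x y =
  (tc t e0 x w * y i1 - tc t e1 x w * y i0) + (x i0 * tc t e1 y w - x i1 * tc t e0 y w).
Proof. ex; ring. Qed.

Lemma I6 w k : ksv * w k = q w wsv * wsv k + q w Lv * Lv k.
Proof. case: (ord2P k) => ->; ex; ring. Qed.

Lemma I7 x : tc t (m2 1 0) x wsv = Mx x i0 /\ tc t (m2 0 1) x wsv = Mx x i1.
Proof. split; ex; ring. Qed.

Lemma I7b x b : tc t x b wsv = q b (Mx x).
Proof. ex; ring. Qed.

Lemma I8 x k : Mx (Mx x) k = sv * x k.
Proof. case: (ord2P k) => ->; ex; ring. Qed.

Lemma I9 x : Qform tt x = tc t x (Mx x) Lv.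
Proof. rewrite /Qform; ex; ring. Qed.

Lemma I10 x : Qform tt (Mx x) = sv * Qform tt x.
Proof. rewrite /Qform; ex; ring. Qed.

Lemma I11 a x : tc t a (Mx x) wsv = sv * q a x.
Proof. ex; ring. Qed.

Lemma I12 x : q (Mx x) (Mx x) = sv * q x x.
Proof. ex; ring. Qed.

Lemma I13 x : Eform tt x = det2 x (Mx x).
Proof. rewrite /Eform; ex; ring. Qed.

Lemma I14 : q wsv Lv = 0.
Proof. ex; ring. Qed.

Lemma I15 x c : ksv * tc t x (Mx x) c = q wsv c * tc t x (Mx x) wsv + q Lv c * tc t x (Mx x) Lv.
Proof. ex; ring. Qed.

End P4.

Section P5.
Variable R : realType.
Local Notation C := (R[i]).
Local Notation vec := (vec R).
Local Notation tensor := (tensor R).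
Implicit Types (z : tensor) (x y w a b c v : vec).

Lemma tprod_eq x y w x' y' w' :
  (forall i j k, x i * y j * w k = x' i * y' j * w' k) -> tprod x y w = tprod x' y' w'.
Proof. by move=> h; apply: tensor_eq => i j k; rewrite !tprodE h. Qed.

Lemma tprod_neq0_of x y w i j k : x i * y j * w k != 0 -> tprod x y w != 0.
Proof. by move=> h; apply: contraNneq h => e; rewrite -tprodE e ffunE. Qed.

Lemma dehom (F : vec -> C) d (hom : forall l x, F (vsc l x) = l ^+ d * F x) x :
  F x = 0 -> (x i0 != 0 \/ x i1 != 0) -> F (m2 0 1) != 0 ->
  x i0 != 0 /\ F (m2 1 (x i1 / x i0)) = 0.
Proof.
move=> hF hx h01; case: (eqVneq (x i0) 0) => h0.
- exfalso; case: hx => hx; first by rewrite h0 eqxx in hx.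
  have ex : x = vsc (x i1) (m2 0 1).
    by apply: vec_eq; rewrite /vsc /m2 /= ?h0; ring.
  move: hF; rewrite ex hom => /eqP; rewrite mulf_eq0 expf_eq0 (negPf hx) andbF /=.
  by rewrite (negPf h01).
- split => //.
  have ex : x = vsc (x i0) (m2 1 (x i1 / x i0)).
    by apply: vec_eq; rewrite /vsc /m2 /=; field.
  move: hF; rewrite {1}ex hom => /eqP; rewrite mulf_eq0 expf_eq0 (negPf h0) andbF /=.
  by move/eqP.
Qed.

Variable t : tensor.
Hypothesis hS : S21 t.

Let s100 := hS i1 i0 i0.
Let s101 := hS i1 i0 i1.

Ltac ex := rewrite ?tcE ?qE /det2 /Mx /vv /sv /ksv /Lv /wsv /sg /ksg /Mg /wsg /Lg /perp /m2 /tt /e0 /e1 /vsc /vscale ?sum2 /=;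
  rewrite ?s100 ?s101.

Lemma X21_P x w : Ecrit t x x w -> Pform (tt t) x = 0 /\ vv t x = vscale (q x x ^+ 2) w.
Proof.
move=> [h1 h2 h3].
have hv : vv t x = vscale (q x x ^+ 2) w.
  apply: vec_eq.
  - transitivity (tc t x x (m2 1 0)); first by ex; ring.
    by rewrite h3; ex; ring.
  - transitivity (tc t x x (m2 0 1)); first by ex; ring.
    by rewrite h3; ex; ring.
split => //.
rewrite I2 // hv.
transitivity (q x x ^+ 2 * tc t (perp x) x w); first by ex; ring.
rewrite h1; have -> : q x (perp x) = 0 by ex; ring.
by rewrite !mul0r mulr0.
Qed.

Definition Z21 x := tprod x x (vscale ((q x x ^+ 2)^-1) (vv t x)).
Definition ZP x := tprod x (Mx t x) (vscale ((q x x * ksv t)^-1) (wsv t)).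

Lemma qm2 (u : C) : q (m2 1 u) (m2 1 u) = 1 + u ^+ 2.
Proof. rewrite qE /m2 /=; ring. Qed.

Lemma Z21_crit (u : C) : (pPg (tt t)).[u] = 0 -> 1 + u ^+ 2 != 0 -> (pVg (tt t)).[u] != 0 ->
  Z21 (m2 1 u) != 0 /\ Ecrit t (m2 1 u) (m2 1 u) (vscale ((q (m2 1 u) (m2 1 u) ^+ 2)^-1) (vv t (m2 1 u))).
Proof.
rewrite pPg_eval pVg_eval => hP hq hV.
set x := m2 1 u; set Q := q x x; set v := vv t x.
have hQ : Q != 0 by rewrite /Q qm2.
have hE1 : forall a, tc t a x (vscale (Q ^+ 2)^-1 v) = q x a * Q * q (vscale (Q ^+ 2)^-1 v) (vscale (Q ^+ 2)^-1 v).
  move=> a.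
  have e1 : Q * tc t a x v = q x a * q v v.
    by rewrite /Q (@I3 R t hS) (@I4 R t hS) -(@I2 R t hS) hP mulr0 addr0.
  have -> : tc t a x (vscale (Q ^+ 2)^-1 v) = (Q ^+ 2)^-1 * tc t a x v by ex; ring.
  have -> : q (vscale (Q ^+ 2)^-1 v) (vscale (Q ^+ 2)^-1 v) = (Q ^+ 2)^-1 * (Q ^+ 2)^-1 * q v v by ex; ring.
  have -> : tc t a x v = q x a * q v v / Q by rewrite -e1; field.
  by field.
split.
- apply: (@tprod_neq0_of _ _ _ i0 i0 i0).
  rewrite /x /vscale /m2 /= !mul1r; apply: mulf_neq0; first by rewrite invr_eq0 expf_neq0.
  exact: hV.
split => //.
- by move=> b; rewrite -tc_sym12 // hE1 /Q; ring.
- move=> c; rewrite (@I4 R t hS).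
  have -> : q (vscale (Q ^+ 2)^-1 v) c = (Q ^+ 2)^-1 * q v c by ex; ring.
  rewrite -/Q; fsc.
Qed.

Lemma Mx_scale l x : Mx t (vscale l x) = vscale l (Mx t x).
Proof. by apply: vec_eq; ex; ring. Qed.

Lemma q_sym x y : q x y = q y x.
Proof. rewrite !qE; ring. Qed.

Lemma pair_class x y w : tprod x y w != 0 -> Ecrit t x y w -> det2 x y != 0 ->
  ksv t != 0 -> sv t != 0 -> Qform (tt t) (m2 0 1) != 0 ->
  exists r : C, Qform (tt t) (m2 1 r) = 0 /\ tprod x y w = ZP (m2 1 r).
Proof.
move=> nz [h1 h2 h3] hd hk hs hq.
have hLw : q (Lv t) w = 0.
  have e := @I5 R t hS x y w.
  rewrite (tc_sym12 hS (e0 R) x w) (tc_sym12 hS (e1 R) x w) h2 h2 h1 h1 in e.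
  have : q (Lv t) w * det2 x y = 0 by rewrite e /e0 /e1 !qE /m2 /=; ring.
  by move/eqP; rewrite mulf_eq0 (negPf hd) orbF => /eqP.
pose c := q w (wsv t) / ksv t.
have hw : w = vscale c (wsv t).
  apply: functional_extensionality => k; rewrite /vscale /c.
  have := @I6 R t w k; rewrite (q_sym w (Lv t)) hLw mul0r addr0 => e.
  apply: (mulfI hk); rewrite e; field; done.
have hc : c != 0.
  apply/negP => /eqP c0; move/negP: nz; apply; apply/eqP; apply: tensor_eq => i j k.
  by rewrite tprodE ffunE hw /vscale c0 !mul0r mulr0.
have hb : forall b, c * q b (Mx t x) = q x x * q y b * (c * c * ksv t).
  move=> b; have := h2 b; rewrite hw.
  have -> : tc t x b (vscale c (wsv t)) = c * tc t x b (wsv t) by ex; ring.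
  have -> : q (vscale c (wsv t)) (vscale c (wsv t)) = c * c * ksv t by ex; ring.
  by rewrite (@I7b R t hS).
have hM : forall i, Mx t x i = c * q x x * ksv t * y i.
  move=> i; apply: (mulfI hc).
  have := hb (m2 (i == i0)%:R (i == i1)%:R).
  case: (ord2P i) => ->; rewrite !qE /m2 /= => e.
  - transitivity (c * (1 * Mx t x i0 + 0 * Mx t x i1)); first by ring.
    rewrite e; ring.
  - transitivity (c * (0 * Mx t x i0 + 1 * Mx t x i1)); first by ring.
    rewrite e; ring.
have hQ : q x x != 0.
  apply/negP => /eqP hQ0; move: hd.
  have hM0 : forall i, Mx t x i = 0 by move=> i; rewrite hM hQ0; ring.
  have hx : forall k, x k = 0.
    move=> k; have := @I8 R t hS x k.
    rewrite {1}/Mx sum2 !hM0 !mulr0 addr0 => /esym /eqP.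
    by rewrite mulf_eq0 (negPf hs) /= => /eqP.
  by rewrite /det2 !hx !mul0r subrr eqxx.
have hy : y = vscale ((c * q x x * ksv t)^-1) (Mx t x).
  apply: functional_extensionality => j; rewrite /vscale hM; field.
  by rewrite hc hQ hk.
have hQx : Qform (tt t) x = 0.
  have := h3 (Lv t); rewrite (q_sym w (Lv t)) hLw mulr0 hy.
  have -> : tc t x (vscale ((c * q x x * ksv t)^-1) (Mx t x)) (Lv t)
    = (c * q x x * ksv t)^-1 * tc t x (Mx t x) (Lv t) by ex; ring.
  rewrite -(@I9 R t hS) => /eqP; rewrite mulf_eq0 invr_eq0 => /orP [h|/eqP //].
  by move: h; rewrite mulf_eq0 (negPf hk) orbF mulf_eq0 (negPf hQ) orbF (negPf hc).
have hx01 : x i0 != 0 \/ x i1 != 0.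
  case: (eqVneq (x i0) 0) => h0; last by left.
  right; apply: contraNneq hd => h1'; by rewrite /det2 h0 h1' !mul0r subrr.
have [hx0 hr] := dehom (@Qform_scale _ (tt t)) hQx hx01 hq.
exists (x i1 / x i0); split => //.
set r := x i1 / x i0.
have ex : x = vscale (x i0) (m2 1 r) by apply: vec_eq; rewrite /vscale /m2 /r /=; field.
have hQ' : q (m2 1 r) (m2 1 r) != 0.
  by move: hQ; rewrite {1 2}ex q_scale !mulf_eq0 negb_or => /andP[].
rewrite /ZP; apply: tprod_eq => i j k; rewrite hy hw /vscale.
rewrite {1 2 3 4}ex Mx_scale q_scale /vscale; field.
by rewrite hx0 hc hQ' hk.
Qed.

Lemma comp_nz (v : vec) : (v i0 = 0 -> v i1 = 0 -> False) -> exists k, v k != 0.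
Proof.
move=> h; case: (eqVneq (v i0) 0) => h0; last by exists i0.
case: (eqVneq (v i1) 0) => h1; last by exists i1.
by exfalso; apply: h.
Qed.

Lemma Mx_nz x : sv t != 0 -> x i0 != 0 -> exists j, Mx t x j != 0.
Proof.
move=> hs hx; apply: comp_nz => a0 a1.
have := @I8 R t hS x i0; rewrite {1}/Mx sum2 a0 a1 !mulr0 addr0 => /esym /eqP.
by rewrite mulf_eq0 (negPf hs) (negPf hx).
Qed.

Lemma ksv_ws : ksv t = wsv t i0 ^+ 2 + wsv t i1 ^+ 2.
Proof. ex; ring. Qed.

Lemma ZP_crit (r : C) : Qform (tt t) (m2 1 r) = 0 -> 1 + r ^+ 2 != 0 -> ksv t != 0 -> sv t != 0 ->
  ZP (m2 1 r) != 0 /\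
  Ecrit t (m2 1 r) (Mx t (m2 1 r)) (vscale ((q (m2 1 r) (m2 1 r) * ksv t)^-1) (wsv t)).
Proof.
move=> hQr hr hk hs.
have hQ : q (m2 1 r) (m2 1 r) != 0 by rewrite qm2.
set x := m2 1 r; set Q := q x x; set ka := (Q * ksv t)^-1.
have hww : q (vscale ka (wsv t)) (vscale ka (wsv t)) = ka * ka * ksv t by ex; ring.
split.
- have [j hj] : exists j, Mx t x j != 0 by apply: Mx_nz => //; exact: oner_neq0.
  have [k hk'] : exists k, wsv t k != 0.
    apply: comp_nz => a0 a1; move: hk; by rewrite ksv_ws a0 a1 expr0n /= addr0 eqxx.
  apply: (@tprod_neq0_of _ _ _ i0 j k); rewrite /vscale /x /m2 /= mul1r.
  by rewrite !mulf_neq0 // invr_eq0 mulf_neq0.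
split.
- move=> a.
  have -> : tc t a (Mx t x) (vscale ka (wsv t)) = ka * tc t a (Mx t x) (wsv t) by ex; ring.
  rewrite (@I11 R t hS) (@I12 R t hS) hww (q_sym a x) /ka -/Q; field.
  by rewrite hQ hk.
- move=> b.
  have -> : tc t x b (vscale ka (wsv t)) = ka * tc t x b (wsv t) by ex; ring.
  rewrite (@I7b R t hS) hww (q_sym b) /ka -/Q; field.
  by rewrite hQ hk.
- move=> c.
  have e := @I15 R t hS x c.
  rewrite (@I11 R t hS) -(@I9 R t hS) hQr mulr0 addr0 in e.
  have -> : tc t x (Mx t x) c = q (wsv t) c * (sv t * Q) / ksv t.
    by rewrite -e; field.
  have -> : q (vscale ka (wsv t)) c = ka * q (wsv t) c by ex; ring.
  rewrite (@I12 R t hS) /ka -/Q; field.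
  by rewrite hQ hk.
Qed.

Lemma Qform_horner (r : C) : Qform (tt t) (m2 1 r) =
  (pQg (tt t))`_0 + (pQg (tt t))`_1 * r + Qform (tt t) (m2 0 1) * r ^+ 2.
Proof. by rewrite -pQg_eval (horner3 _ (size_pQg _)) pQg_coef2. Qed.

Lemma roots_pair (r1 : C) : Qform (tt t) (m2 1 r1) = 0 -> Eform (tt t) (m2 1 r1) != 0 ->
  sv t != 0 -> Qform (tt t) (m2 0 1) != 0 -> 1 + r1 ^+ 2 != 0 -> ksv t != 0 ->
  let y1 := Mx t (m2 1 r1) in
  [/\ y1 i0 != 0, Qform (tt t) (m2 1 (y1 i1 / y1 i0)) = 0,
     forall r, Qform (tt t) (m2 1 r) = 0 -> r = r1 \/ r = y1 i1 / y1 i0,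
     1 + (y1 i1 / y1 i0) ^+ 2 != 0 &
     ZP (m2 1 (y1 i1 / y1 i0)) =
       tprod y1 (m2 1 r1) (vscale ((q (m2 1 r1) (m2 1 r1) * ksv t)^-1) (wsv t))].
Proof.
move=> hQ1 hE hs hq hr1 hk y1.
have hQy : Qform (tt t) y1 = 0 by rewrite /y1 (@I10 R t hS) hQ1 mulr0.
have hy01 : y1 i0 != 0 \/ y1 i1 != 0.
  have [j hj] := @Mx_nz (m2 1 r1) hs (oner_neq0 _).
  by case: (ord2P j) hj => -> hj; [left|right].
have [hy0 hr2] := dehom (@Qform_scale _ (tt t)) hQy hy01 hq.
set r2 := y1 i1 / y1 i0.
have hd : r1 != r2.
  apply: contraNneq hE => e; rewrite (@I13 R t hS) /det2 -/y1 /m2 /= e /r2.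
  by apply/eqP; field.
have hQ1' : q (m2 1 r1) (m2 1 r1) != 0 by rewrite qm2.
have ey : y1 = vscale (y1 i0) (m2 1 r2) by apply: vec_eq; rewrite /vscale /m2 /r2 /=; field.
split => //.
- move=> r hr.
  move: hQ1 hr2 hr; rewrite !Qform_horner.
  set c0 := (pQg (tt t))`_0; set c1 := (pQg (tt t))`_1; set c2 := Qform (tt t) (m2 0 1).
  move=> e1 e2 e.
  have hc1 : c1 = - c2 * (r1 + r2).
    have : (r1 - r2) * (c1 + c2 * (r1 + r2)) = 0.
      transitivity ((c0 + c1 * r1 + c2 * r1 ^+ 2) - (c0 + c1 * r2 + c2 * r2 ^+ 2)); first by ring.
      by rewrite e1 e2 subrr.
    move/eqP; rewrite mulf_eq0 subr_eq0 (negPf hd) /= => /eqP h.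
    by apply/eqP; rewrite -subr_eq0; apply/eqP; rewrite -h; ring.
  have hc0 : c0 = c2 * r1 * r2.
    apply/eqP; rewrite -subr_eq0; apply/eqP.
    transitivity (c0 + c1 * r1 + c2 * r1 ^+ 2); last exact: e1.
    rewrite hc1; ring.
  have : c2 * ((r - r1) * (r - r2)) = 0.
    rewrite -e hc0 hc1; ring.
  move/eqP; rewrite !mulf_eq0 (negPf hq) /= !subr_eq0 => /orP [/eqP -> | /eqP ->]; by [left|right].
- have : q y1 y1 != 0 by rewrite /y1 (@I12 R t hS) mulf_neq0.
  rewrite {1 2}ey q_scale qm2 !mulf_eq0 !negb_or => /andP[_ //].
- rewrite /ZP; apply: tprod_eq => i j k.
  have ex2 : m2 1 r2 = vscale (y1 i0)^-1 y1 by apply: vec_eq; rewrite /vscale /m2 /r2 /=; field.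
  rewrite ex2 Mx_scale q_scale /vscale.
  rewrite /y1 (@I8 R t hS) (@I12 R t hS) -/y1; field.
  by rewrite hy0 hs hQ1' hk.
Qed.
End P5.

Section P6.
Variable R : realType.
Local Notation C := (R[i]).
Local Notation vec := (vec R).
Local Notation tensor := (tensor R).
Implicit Types (z : tensor) (x y w a b c v : vec).

Lemma par x y : (x i0 != 0 \/ x i1 != 0) -> det2 x y = 0 -> exists l, y = vscale l x.
Proof.
rewrite /det2 => hx /eqP; rewrite subr_eq0 => /eqP hd.
case: hx => hx.
- exists (y i0 / x i0); apply: vec_eq; rewrite /vscale; first by field.
  by rewrite -[y i1](mulKf hx) hd; field.
- exists (y i1 / x i1); apply: vec_eq; rewrite /vscale; last by field.
  by rewrite -[y i0](mulKf hx) -hd; field.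
Qed.

Lemma tprod_nz_x x y w : tprod x y w != 0 -> x i0 != 0 \/ x i1 != 0.
Proof.
move=> /tprod_nz [i [j [k]]]; rewrite !mulf_eq0 !negb_or => /andP[/andP[hx _] _].
by case: (ord2P i) hx => -> hx; [left|right].
Qed.

Lemma swap_neq x y w k : det2 x y != 0 -> w k != 0 -> tprod x y w != tprod y x w.
Proof.
move=> hd hw; apply/negP => /eqP e.
have e1 := congr1 (fun z => z (i0, i1, k)) e; have e2 := congr1 (fun z => z (i1, i0, k)) e.
move: e1 e2; rewrite /= !tprodE => e1 e2.
move: hd; rewrite /det2.
have -> : x i0 * y i1 = y i0 * x i1 by apply: (mulIf hw).
by rewrite mulrC subrr eqxx.
Qed.

Lemma notX21 x y w k : det2 x y != 0 -> w k != 0 -> ~ X21 (tprod x y w).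
Proof.
move=> hd hw [a [b e]].
have e1 : tprod x y w (i0, i1, k) = tprod x y w (i1, i0, k) by rewrite e !tprodE; ring.
move: e1; rewrite !tprodE => e1.
move: hd; rewrite /det2.
have -> : x i0 * y i1 = x i1 * y i0 by apply: (mulIf hw).
by rewrite subrr eqxx.
Qed.

Lemma q_scalel l x y : q (vscale l x) y = l * q x y.
Proof. rewrite !qE /vscale; ring. Qed.

Lemma sv_of_crit t z (sg : C) a b c : critical (@X3 R) (@T3 R) t z ->
  z = tscale sg (tprod a b c) -> q a a = 1 -> q b b = 1 -> q c c = 1 -> singular_value t z sg.
Proof.
move=> hc ez ha hb hc'.
have ez1 : z = tprod (vscale sg a) b c by rewrite ez; apply: tensor_eq => i j k; rewrite !ffunE /vscale; ring.
have ez2 : tprod (vscale sg a) b c = tprod a (vscale sg b) c by apply: tprod_eq => i j k; rewrite /vscale; ring.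
have ez3 : tprod (vscale sg a) b c = tprod a b (vscale sg c) by apply: tprod_eq => i j k; rewrite /vscale; ring.
move: hc; rewrite ez1 crit3P => [[nz E]].
have [E1 _ _] := E.
have [_ E2 _] := Ecrit_any ez2 nz E.
have [_ _ E3] := Ecrit_any ez3 nz E.
exists a, b, c; split => //; first by rewrite -ez1 ez.
move=> v; split.
- by have := E1 v; rewrite /tc => ->; rewrite q_scalel hb hc'; ring.
- by have := E2 v; rewrite /tc => ->; rewrite q_scalel ha hc'; ring.
- by have := E3 v; rewrite /tc => ->; rewrite q_scalel ha hb; ring.
Qed.

Variable t : tensor.
Hypothesis hS : S21 t.

Let s100 := hS i1 i0 i0.
Let s101 := hS i1 i0 i1.

Ltac ex := rewrite ?tcE ?qE /det2 /Mx /vv /sv /ksv /Lv /wsv /sg /ksg /Mg /wsg /Lg /perp /m2 /tt /e0 /e1 /vsc /vscale ?sum2 /=;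
  rewrite ?s100 ?s101.

Lemma vv_scale l x : vv t (vscale l x) = vscale (l ^+ 2) (vv t x).
Proof. by apply: vec_eq; ex; ring. Qed.

Lemma X21_class x w : tprod x x w != 0 -> Ecrit t x x w -> (pPg (tt t))`_4 != 0 ->
  (forall r, (pPg (tt t)).[r] = 0 -> 1 + r ^+ 2 != 0) ->
  exists r, (pPg (tt t)).[r] = 0 /\ tprod x x w = Z21 t (m2 1 r).
Proof.
move=> nz E h4 hI.
have [hP hv] := @X21_P R t hS x w E.
have hx := tprod_nz_x nz.
rewrite pPg_coef4 in h4.
have [hx0 hr] := dehom (@Pform_scale _ (tt t)) hP hx h4.
set r := x i1 / x i0.
have hroot : (pPg (tt t)).[r] = 0 by rewrite pPg_eval.
exists r; split => //.
have hq' : q (m2 1 r) (m2 1 r) != 0 by rewrite qm2 hI.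
have ex : x = vscale (x i0) (m2 1 r) by apply: vec_eq; rewrite /vscale /m2 /r /=; field.
have hQ : q x x != 0 by rewrite {1 2}ex q_scale !mulf_neq0.
have hw : w = vscale ((q x x ^+ 2)^-1) (vv t x).
  apply: functional_extensionality => k; rewrite hv /vscale; field.
  by rewrite hQ.
rewrite hw /Z21; apply: tprod_eq => i j k.
rewrite {1 2 3 4 5}ex vv_scale q_scale /vscale; field.
by rewrite hx0 hq'.
Qed.
End P6.

Section P7.
Variable R : realType.
Local Notation C := (R[i]).
Local Notation vec := (vec R).
Local Notation tensor := (tensor R).
Implicit Types (z : tensor) (x y a b c v : vec).

Variable t : tensor.
Hypothesis hS : S21 t.

Local Notation pP := (pPg (tt t)).
Local Notation pQ := (pQg (tt t)).
Local Notation pV := (pVg (tt t)).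
Local Notation pE := (pEg (tt t)).
Local Notation pI := (pIg C).

Hypothesis G1 : pP`_4 != 0.
Hypothesis G2 : resultant pP pP^`() != 0.
Hypothesis G3 : resultant pP pI != 0.
Hypothesis G4 : resultant pP pV != 0.
Hypothesis G5 : pV`_2 != 0.
Hypothesis G6 : ksv t != 0.
Hypothesis G7 : sv t != 0.
Hypothesis G8 : pQ`_2 != 0.
Hypothesis G9 : pE`_2 != 0.
Hypothesis G10 : resultant pQ pI != 0.
Hypothesis G11 : resultant pQ pE != 0.

Lemma size_pI : size pI = 3%N.
Proof. by rewrite /pIg addrC size_addl ?size_polyXn ?size_poly1. Qed.

Lemma hsP : size pP = 5%N. Proof. by have [_ ->] := lead_of_coef (size_pPg _) G1. Qed.
Lemma hsV : size pV = 3%N. Proof. by have [_ ->] := lead_of_coef (size_pVg _) G5. Qed.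
Lemma hsQ : size pQ = 3%N. Proof. by have [_ ->] := lead_of_coef (size_pQg _) G8. Qed.
Lemma hsE : size pE = 3%N. Proof. by have [_ ->] := lead_of_coef (size_pEg _) G9. Qed.

Lemma hP_I r : pP.[r] = 0 -> 1 + r ^+ 2 != 0.
Proof.
move=> h; apply/negP => /eqP h'.
apply: (@res_noroot _ pP pI r G3); [by rewrite hsP | by rewrite size_pI | exact/rootP |].
by apply/rootP; rewrite pIg_eval.
Qed.

Lemma hP_V r : pP.[r] = 0 -> pV.[r] != 0.
Proof.
move=> h; apply/negP => /eqP h'.
apply: (@res_noroot _ pP pV r G4); [by rewrite hsP | by rewrite hsV | exact/rootP | exact/rootP].
Qed.

Lemma hQ_I r : pQ.[r] = 0 -> 1 + r ^+ 2 != 0.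
Proof.
move=> h; apply/negP => /eqP h'.
apply: (@res_noroot _ pQ pI r G10); [by rewrite hsQ | by rewrite size_pI | exact/rootP |].
by apply/rootP; rewrite pIg_eval.
Qed.

Lemma hQ_E r : pQ.[r] = 0 -> pE.[r] != 0.
Proof.
move=> h; apply/negP => /eqP h'.
apply: (@res_noroot _ pQ pE r G11); [by rewrite hsQ | by rewrite hsE | exact/rootP | exact/rootP].
Qed.

Lemma crit21_iff z : critical (@X21 R) (@T21 R) t z <-> exists r, pP.[r] = 0 /\ z = Z21 t (m2 1 r).
Proof.
split.
- move=> hc; have [_ [[a [b ez]] _]] := hc; move: hc; rewrite ez (crit21P hS) => [[nz E]].
  have [r [hr e]] := X21_class hS nz E G1 hP_I.
  by exists r.
- move=> [r [hr ->]]; rewrite /Z21 (crit21P hS).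
  exact: (Z21_crit hS hr (hP_I hr) (hP_V hr)).
Qed.

Lemma crit21_crit3 z : critical (@X21 R) (@T21 R) t z -> critical (@X3 R) (@T3 R) t z.
Proof.
move=> hc; have [_ [[a [b ez]] _]] := hc; move: hc; rewrite ez (crit21P hS) crit3P //.
Qed.

Let s100 := hS i1 i0 i0.
Let s101 := hS i1 i0 i1.
Ltac ex := rewrite ?tcE ?qE /det2 /Mx /vv /sv /ksv /Lv /wsv /sg /ksg /Mg /wsg /Lg /perp /m2 /tt /e0 /e1 /vsc /vscale ?sum2 /=;
  rewrite ?s100 ?s101.

Lemma det2_sym x y : det2 y x = - det2 x y.
Proof. rewrite /det2; ring. Qed.

Lemma qws : q (wsv t) (wsv t) = ksv t.
Proof. ex; ring. Qed.

Lemma pair_core : exists x y zz : vec,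
  [/\ tprod x y zz != tprod y x zz, ~ X21 (tprod x y zz), ~ X21 (tprod y x zz),
      (forall w : tensor, critical (@X3 R) (@T3 R) t w <->
         critical (@X21 R) (@T21 R) t w \/ w = tprod x y zz \/ w = tprod y x zz) &
      (real_tensor t -> exists sigma : C, sigma \is Num.real /\
         singular_value t (tprod x y zz) sigma /\ singular_value t (tprod y x zz) sigma)].
Proof.
have [r1 hr1] : exists r1, root pQ r1 by apply/closed_rootP; rewrite hsQ.
move/rootP: hr1 => hr1.
have hI1 := hQ_I hr1; have hE1 := hQ_E hr1.
have hQ1 : Qform (tt t) (m2 1 r1) = 0 by rewrite -pQg_eval.
have hE1' : Eform (tt t) (m2 1 r1) != 0 by rewrite -pEg_eval.
have hq : Qform (tt t) (m2 0 1) != 0 by rewrite -pQg_coef2.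
have [hy0 hQ2 hroots hI2 hB] := roots_pair hS hQ1 hE1' G7 hq hI1 G6.
move: hy0 hQ2 hroots hI2 hB.
set x := m2 1 r1; set y := Mx t x; set zz := vscale ((q x x * ksv t)^-1) (wsv t).
move=> hy0 hQ2 hroots hI2 hB.
have hqx : q x x != 0 by rewrite /x qm2.
exists x, y, zz.
have hd : det2 x y != 0 by rewrite /y -(@I13 R t hS).
have hd' : det2 y x != 0 by rewrite det2_sym oppr_eq0.
have [k hk] : exists k, zz k != 0.
  have [k hk] : exists k, wsv t k != 0.
    apply: comp_nz => a0 a1; move: G6; by rewrite (@ksv_ws R t) a0 a1 expr0n /= addr0 eqxx.
  by exists k; rewrite /zz /vscale mulf_neq0 // invr_eq0 mulf_neq0.
have hA : critical (@X3 R) (@T3 R) t (tprod x y zz).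
  have [nz E] := ZP_crit hS hQ1 hI1 G6 G7.
  by rewrite crit3P.
have hBc : critical (@X3 R) (@T3 R) t (tprod y x zz).
  rewrite -hB; have [nz E] := ZP_crit hS hQ2 hI2 G6 G7.
  by rewrite /ZP crit3P.
split.
- exact: swap_neq hd hk.
- exact: notX21 hd hk.
- exact: notX21 hd' hk.
- move=> w; split.
  + move=> hc; have [_ [[a [b [c ew]]] _]] := hc; move: hc; rewrite ew crit3P => [[nz E]].
    case: (eqVneq (det2 a b) 0) => hab.
    * left; have [l el] := par (tprod_nz_x nz) hab.
      have e2 : tprod a b c = tprod a a (vscale l c).
        by apply: tprod_eq => i j k'; rewrite el /vscale; ring.
      rewrite e2 (crit21P hS); split; first by rewrite -e2.
      exact: (Ecrit_any e2 nz E).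
    * right; have [r [hr ew']] := pair_class hS nz E hab G6 G7 hq.
      case: (hroots r hr) => er; [left | right]; rewrite ew' er //.
  + move=> [h|[->|->]] //; exact: crit21_crit3.
- move=> ht.
  have rT : forall i j k0, tt t i j k0 \is Num.real by move=> i j k0; exact: ht.
  have rL : forall k0, Lg (tt t) k0 \is Num.real by move=> k0; rewrite /Lg rpredD.
  have rws : forall k0, wsg (tt t) k0 \is Num.real.
    by move=> k0; case: (ord2P k0) => ->; rewrite /wsg /m2 /= ?rpredN.
  have rM : forall i j, Mg (tt t) i j \is Num.real.
    by move=> i j; rewrite /Mg sum2 rpredD // rpredM.
  have hs0 : 0 <= sv t.
    by rewrite /sv /sg addr_ge0 // real_exprn_even_ge0.
  have hk0 : 0 <= ksv t.
    by rewrite /ksv /ksg addr_ge0 // real_exprn_even_ge0.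
  set ss := sqrtC (sv t); set sk := sqrtC (ksv t); set rq := sqrtC (q x x).
  have hss : ss != 0 by rewrite sqrtC_eq0.
  have hsk : sk != 0 by rewrite sqrtC_eq0.
  have hrq : rq != 0 by rewrite sqrtC_eq0.
  have es : sv t = ss ^+ 2 by rewrite sqrtCK.
  have ek : ksv t = sk ^+ 2 by rewrite sqrtCK.
  have eQ : q x x = rq ^+ 2 by rewrite sqrtCK.
  exists (ss / sk); split.
    by apply: rpredM; [exact: sqrtC_real | rewrite realV; exact: sqrtC_real].
  set xh := vscale rq^-1 x; set yh := vscale (ss * rq)^-1 y; set wh := vscale sk^-1 (wsv t).
  have qx : q xh xh = 1 by rewrite q_scale eQ; field; rewrite ?hrq.
  have qy : q yh yh = 1 by rewrite q_scale (@I12 R t hS) es eQ; field; rewrite ?hss ?hrq.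
  have qw : q wh wh = 1 by rewrite q_scale qws ek; field; rewrite ?hsk.
  split.
  + apply: (sv_of_crit hA _ qx qy qw).
    apply: tensor_eq => i j k'; rewrite !tprodE /tscale ffunE tprodE /zz /xh /yh /wh /vscale eQ ek; field.
    by rewrite hrq hsk hss.
  + apply: (sv_of_crit hBc _ qy qx qw).
    apply: tensor_eq => i j k'; rewrite !tprodE /tscale ffunE tprodE /zz /xh /yh /wh /vscale eQ ek; field.
    by rewrite hrq hsk hss.
Qed.

Lemma Z21_entry (r : C) i j k : Z21 t (m2 1 r) (i, j, k) =
  m2 1 r i * m2 1 r j * ((q (m2 1 r) (m2 1 r) ^+ 2)^-1 * vv t (m2 1 r) k).
Proof. by rewrite /Z21 tprodE. Qed.


Lemma Z21_inj r r' : pP.[r] = 0 -> pP.[r'] = 0 -> Z21 t (m2 1 r) = Z21 t (m2 1 r') -> r = r'.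
Proof.
move=> hr0 hr0' ez.
have W0 : forall r0, pP.[r0] = 0 ->
    (q (m2 1 r0) (m2 1 r0) ^+ 2)^-1 * vv t (m2 1 r0) i0 != 0.
  move=> r0 h0; rewrite mulf_neq0 //.
    by rewrite invr_eq0 expf_neq0 // qm2 hP_I.
  by have := hP_V h0; rewrite pVg_eval.
have e1 := congr1 (fun z => z (i0, i0, i0)) ez; have e2 := congr1 (fun z => z (i0, i1, i0)) ez.
move: e1 e2; rewrite /= !Z21_entry /m2 /= !mul1r => e1 e2.
by apply: (mulIf (W0 r hr0)); rewrite e2 e1.
Qed.

Lemma roots_P : exists rs : seq C, [/\ uniq rs, size rs = 4%N & forall r, pP.[r] = 0 <-> r \in rs].
Proof.
have p0 : pP != 0 by rewrite -size_poly_eq0 hsP.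
have [rs [u s e]] := roots_uniq p0 G2.
exists rs; split => //; first by rewrite s hsP.
by move=> r; rewrite -e; split => [/rootP|/rootP].
Qed.

Lemma part1_main :
    exists s : seq (tensor),
      [/\ uniq s, size s = 4%N &
          forall z, critical (@X21 R) (@T21 R) t z <-> z \in s] /\
      exists x y z : vec,
        let z1 := tprod x y z in let z2 := tprod y x z in
        [/\ z1 != z2, ~ X21 z1, ~ X21 z2,
            (forall w, critical (@X3 R) (@T3 R) t w <->
                         w \in s \/ w = z1 \/ w = z2) &
            (real_tensor t ->
               exists sigma : R[i], sigma \is Num.real /\
                 singular_value t z1 sigma /\ singular_value t z2 sigma)].
Proof.
have [rs [u sz e]] := roots_P.
have memS : forall z, critical (@X21 R) (@T21 R) t z <-> z \in map (fun r => Z21 t (m2 1 r)) rs.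
  move=> z; rewrite crit21_iff; split.
  - by move=> [r [hr ->]]; apply: map_f; rewrite -e.
  - by move/mapP => [r hr ->]; exists r; rewrite e.
exists (map (fun r => Z21 t (m2 1 r)) rs); split; last first.
  have [x [y [zz [h1 h2 h3 h4 h5]]]] := pair_core.
  exists x, y, zz; split => // w; rewrite h4 memS //.
split => //; last by rewrite size_map.
rewrite map_inj_in_uniq // => r r' hr hr' ez.
by apply: Z21_inj; rewrite ?e.
Qed.

Hypothesis hS3 : S3 t.
Hypothesis H1 : Lg (tt t) i1 != 0.
Hypothesis H2 : Cwg (tt t) != 0.

Let s3a : t (i0,i1,i0) = t (i0,i0,i1). Proof. by case: (hS3 i0 i1 i0). Qed.
Let s3b : t (i1,i0,i0) = t (i0,i0,i1). Proof. by case: (hS3 i1 i0 i0) => -> _; exact: s3a. Qed.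
Let s3c : t (i1,i0,i1) = t (i0,i1,i1). Proof. by case: (hS3 i1 i0 i1). Qed.
Let s3d : t (i1,i1,i0) = t (i0,i1,i1). Proof. by case: (hS3 i1 i1 i0) => _ ->. Qed.

Definition CformC x := \sum_(i < 2) \sum_(j < 2) \sum_(k < 2) t (i, j, k) * x i * x j * perp x k.

Lemma CformC_scale l x : CformC (vscale l x) = l ^+ 3 * CformC x.
Proof. rewrite /CformC /perp /m2 /vscale !sum2 /=; ring. Qed.

Lemma CformC_det x : CformC x = det2 x (vv t x).
Proof. rewrite /CformC /det2 /vv /perp /m2 !sum2 /=; ring. Qed.

Lemma P_CL (r : C) : pP.[r] = CformC (m2 1 r) * (Lg (tt t) i0 + Lg (tt t) i1 * r).
Proof.
rewrite pPg_eval /Pform /CformC /Lg /perp /m2 /tt !sum2 /=.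
rewrite ?s3b ?s3c ?s3d ?s3a; ring.
Qed.

Definition r4 := - Lg (tt t) i0 / Lg (tt t) i1.

Lemma hC4 : CformC (m2 1 r4) != 0.
Proof.
have ew : wsg (tt t) = vscale (- Lg (tt t) i1) (m2 1 r4).
  by apply: vec_eq; rewrite /wsg /vscale /m2 /r4 /=; field.
have : Cwg (tt t) = CformC (wsg (tt t)) by [].
rewrite ew CformC_scale => e; move: H2; rewrite e mulf_eq0 negb_or => /andP[_ //].
Qed.

Lemma hr4 : pP.[r4] = 0.
Proof. rewrite P_CL /r4; have -> : Lg (tt t) i0 + Lg (tt t) i1 * (- Lg (tt t) i0 / Lg (tt t) i1) = 0 by field.
by rewrite mulr0. Qed.

Lemma root_split r : pP.[r] = 0 -> CformC (m2 1 r) != 0 -> r = r4.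
Proof.
rewrite P_CL => /eqP; rewrite mulf_eq0 => /orP [/eqP -> //|/eqP h _]; first by rewrite eqxx.
rewrite /r4; transitivity ((Lg (tt t) i0 + Lg (tt t) i1 * r - Lg (tt t) i0) / Lg (tt t) i1); first by field.
by rewrite h sub0r.
Qed.

Lemma Z21sym r : pP.[r] = 0 -> (Xsym3 (Z21 t (m2 1 r)) <-> CformC (m2 1 r) = 0).
Proof.
move=> hr; set x := m2 1 r.
have hq : q x x != 0 by rewrite /x qm2 hP_I.
set ka := (q x x ^+ 2)^-1.
have hka : ka != 0 by rewrite invr_eq0 expf_neq0.
split.
- move=> [a ea].
  have e1 : Z21 t x (i0,i0,i1) = Z21 t x (i1,i0,i0) by rewrite ea !tprodE; ring.
  rewrite /Z21 !tprodE /vscale -/ka in e1.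
  rewrite CformC_det /det2.
  have hx0 : x i0 = 1 by [].
  have hx1 : x i1 = r by [].
  rewrite hx0 hx1 in e1 *.
  apply: (mulfI hka); rewrite mulr0.
  transitivity (1 * 1 * (ka * vv t x i1) - r * 1 * (ka * vv t x i0)); first by ring.
  by rewrite e1 subrr.
- rewrite CformC_det => hd.
  have [l el] := par (or_introl (oner_neq0 C)) hd.
  set c := ka * l.
  exists (vscale (3.-root c) x); rewrite /Z21 -/ka el; apply: tprod_eq => i j k.
  rewrite /vscale; transitivity (3.-root c ^+ 3 * (x i * x j * x k)); last by ring.
  by rewrite rootCK // /c; ring.
Qed.

Lemma Ecrit_perm23 a b c : Ecrit t a b c -> Ecrit t a c b.
Proof.
move=> [h1 h2 h3]; split.
- by move=> a'; rewrite -tc_sym23 // h1; ring.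
- by move=> b'; rewrite -tc_sym23 // h3; ring.
- by move=> c'; rewrite tc_sym23 // h2; ring.
Qed.

Lemma Ecrit_perm12 a b c : Ecrit t a b c -> Ecrit t b a c.
Proof.
move=> [h1 h2 h3]; split.
- by move=> a'; rewrite -tc_sym12 // h2; ring.
- by move=> b'; rewrite tc_sym12 // h1; ring.
- by move=> c'; rewrite tc_sym12 // h3; ring.
Qed.

Lemma crit3_perm23 a b c : critical (@X3 R) (@T3 R) t (tprod a b c) ->
  critical (@X3 R) (@T3 R) t (tprod a c b).
Proof.
rewrite !crit3P => [[nz E]]; split; last exact: Ecrit_perm23.
apply/negP => /eqP e; move/negP: nz; apply; apply/eqP; apply: tensor_eq => i j k.
have := congr1 (fun z => z (i, k, j)) e; rewrite /= !tprodE ?ffunE => e'.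
by rewrite ?tprodE ?ffunE -e'; ring.
Qed.

Lemma crit3_perm12 a b c : critical (@X3 R) (@T3 R) t (tprod a b c) ->
  critical (@X3 R) (@T3 R) t (tprod b a c).
Proof.
rewrite !crit3P => [[nz E]]; split; last exact: Ecrit_perm12.
apply/negP => /eqP e; move/negP: nz; apply; apply/eqP; apply: tensor_eq => i j k.
have := congr1 (fun z => z (j, i, k)) e; rewrite /= !tprodE ?ffunE => e'.
by rewrite ?tprodE ?ffunE -e'; ring.
Qed.

Lemma sv_perm23 a b c (sg : C) : singular_value t (tprod a b c) sg -> singular_value t (tprod a c b) sg.
Proof.
move=> [x1 [x2 [x3 [h1 h2 h3 ez hv]]]].
exists x1, x3, x2; split => //.
- apply: tensor_eq => i j k.
  have := congr1 (fun z => z (i, k, j)) ez; rewrite /= ?tprodE /tscale ?ffunE ?tprodE /= => e'.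
  rewrite ?tprodE /tscale ?ffunE ?tprodE.
  transitivity (a i * b k * c j); first by ring.
  by rewrite e'; ring.
- move=> v; have [e1 e2 e3] := hv v; split.
  + by rewrite -e1 -!/(tc _ _ _ _) tc_sym23.
  + by rewrite -e3 -!/(tc _ _ _ _) tc_sym23.
  + by rewrite -e2 -!/(tc _ _ _ _) tc_sym23.
Qed.

Lemma Xsym3_sym z : Xsym3 z -> forall i j k, z (i,j,k) = z (j,i,k) /\ z (i,j,k) = z (i,k,j).
Proof. by move=> [a ->] i j k; rewrite !tprodE; split; ring. Qed.

Lemma part2_main :
    exists s : seq tensor,
      [/\ uniq s, size s = 3%N &
          forall z, critical (@Xsym3 R) (@Tsym3 R) t z <-> z \in s] /\
      exists x y : vec,
        let z1 := tprod x x y in let z2 := tprod x y x in let z3 := tprod y x x in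
        [/\ uniq [:: z1; z2; z3], ~ Xsym3 z1 /\ ~ Xsym3 z2 /\ ~ Xsym3 z3,
            (forall w, critical (@X3 R) (@T3 R) t w <->
                         w \in s \/ w = z1 \/ w = z2 \/ w = z3) &
            (real_tensor t ->
               exists sigma : R[i], sigma \is Num.real /\
                 [/\ singular_value t z1 sigma, singular_value t z2 sigma &
                     singular_value t z3 sigma])].
Proof.
have [rs [u sz e]] := roots_P.
pose p := fun r => CformC (m2 1 r) == 0.
have hr4in : r4 \in rs by rewrite -e hr4.
have hpC : forall r, r \in rs -> (predC p r) = (r == r4).
  move=> r hr; rewrite /= /p; case: (eqVneq r r4) => [->|hne]; first by rewrite hC4.
  apply/negP => /negP hc; move/eqP: hne; apply; apply: root_split => //; by rewrite e.
have hcnt : count (predC p) rs = 1%N.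
  by rewrite (eq_in_count hpC) (count_uniq_mem _ u) hr4in.
have hsz : size (filter p rs) = 3%N.
  by have := count_predC p rs; rewrite hcnt sz size_filter => h; apply/eqP; rewrite -(eqn_add2r 1) h.
set rsC := filter p rs.
have hrsC : forall r, r \in rsC -> pP.[r] = 0 /\ CformC (m2 1 r) = 0.
  by move=> r; rewrite mem_filter => /andP[/eqP hc hr]; split => //; rewrite e.
have crit21E : forall w, critical (@X21 R) (@T21 R) t w <->
    w \in map (fun r => Z21 t (m2 1 r)) rsC \/ w = Z21 t (m2 1 r4).
  move=> w; rewrite crit21_iff; split.
  - move=> [r [hr ->]]; have hr' : r \in rs by rewrite -e.
    case: (boolP (p r)) => hp.
    + by left; apply: map_f; rewrite mem_filter hp.
    + by right; move: (hpC r hr'); rewrite /= hp => /esym /eqP ->.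
  - move=> [/mapP [r hr ->]|->]; last by exists r4; rewrite hr4.
    by exists r; case: (hrsC r hr).
exists (map (fun r => Z21 t (m2 1 r)) rsC); split.
  split.
  - rewrite map_inj_in_uniq ?filter_uniq // => r r' hr hr'.
    by apply: Z21_inj; [case: (hrsC r hr) | case: (hrsC r' hr')].
  - by rewrite size_map.
  - move=> z; split.
    + move=> hc; have [_ [[a ez] _]] := hc; move: hc; rewrite ez (critsymP hS3) => [[nz E]].
      have : critical (@X21 R) (@T21 R) t (tprod a a a) by rewrite (crit21P hS).
      rewrite crit21_iff => [[r [hr er]]].
      have hC : CformC (m2 1 r) = 0 by rewrite -(Z21sym hr) -er; exists a.
      by rewrite er; apply: map_f; rewrite mem_filter /p hC eqxx -e.
    + move/mapP => [r hr ->]; have [hr1 hr2] := hrsC r hr.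
      have [a ea] : Xsym3 (Z21 t (m2 1 r)) by rewrite (Z21sym hr1).
      have : critical (@X21 R) (@T21 R) t (Z21 t (m2 1 r)) by rewrite crit21_iff; exists r.
      by rewrite ea (crit21P hS) (critsymP hS3).
set x := m2 1 r4; set y := vscale ((q x x ^+ 2)^-1) (vv t x).
have hx0 : x i0 != 0 by rewrite /x /m2 /= oner_neq0.
have hq : q x x != 0 by rewrite /x qm2 hP_I // hr4.
have hd : det2 x y != 0.
  have -> : det2 x y = (q x x ^+ 2)^-1 * CformC x by rewrite CformC_det /det2 /y /vscale; ring.
  by rewrite mulf_neq0 ?invr_eq0 ?expf_neq0 // hC4.
have hd' : det2 y x != 0 by rewrite det2_sym oppr_eq0.
have hz1 : critical (@X3 R) (@T3 R) t (tprod x x y).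
  by apply: crit21_crit3; rewrite crit21_iff; exists r4; rewrite hr4.
have hz2 : critical (@X3 R) (@T3 R) t (tprod x y x) by apply: crit3_perm23.
have hz3 : critical (@X3 R) (@T3 R) t (tprod y x x) by apply: crit3_perm12.
have [xa [ya [za [hAB hnA hnB hcr hre]]]] := pair_core.
have nc21 : forall w, ~ X21 w -> ~ critical (@X21 R) (@T21 R) t w by move=> w hw [_ [hw' _]].
have hz2AB : tprod x y x = tprod xa ya za \/ tprod x y x = tprod ya xa za.
  move: hz2; rewrite hcr => [[h|//]]; exfalso; apply: (nc21 _ _ h); exact: notX21 hd hx0.
have hz3AB : tprod y x x = tprod xa ya za \/ tprod y x x = tprod ya xa za.
  move: hz3; rewrite hcr => [[h|//]]; exfalso; apply: (nc21 _ _ h); exact: notX21 hd' hx0.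
have h23 : tprod x y x != tprod y x x by apply: swap_neq hd hx0.
have hAB' : forall w, (w = tprod xa ya za \/ w = tprod ya xa za) <-> (w = tprod x y x \/ w = tprod y x x).
  move=> w; case: hz2AB => e2; case: hz3AB => e3.
  - by move: h23; rewrite e2 e3 eqxx.
  - by rewrite e2 e3; split.
  - by rewrite e2 e3; split => [[]|[]]; [right|left|right|left].
  - by move: h23; rewrite e2 e3 eqxx.
exists x, y; split.
- have n12 : tprod x x y != tprod x y x.
    apply/negP => /eqP E1; move: hd.
    have := congr1 (fun z => z (i0, i0, i1)) E1; rewrite /= !tprodE => e1.
    have : x i0 * det2 x y = 0.
      transitivity (x i0 * x i0 * y i1 - x i0 * y i0 * x i1); first by rewrite /det2; ring.
      by rewrite e1 subrr.
    by move/eqP; rewrite mulf_eq0 (negPf hx0) /= => ->.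
  have n13 : tprod x x y != tprod y x x.
    apply/negP => /eqP E1; move: hd.
    have := congr1 (fun z => z (i0, i0, i1)) E1; rewrite /= !tprodE => e1.
    have : x i0 * det2 x y = 0.
      transitivity (x i0 * x i0 * y i1 - y i0 * x i0 * x i1); first by rewrite /det2; ring.
      by rewrite e1 subrr.
    by move/eqP; rewrite mulf_eq0 (negPf hx0) /= => ->.
  by rewrite /= !inE !negb_or n12 n13 h23.
- split; [|split].
  + move/Xsym3_sym => /(_ i0 i0 i1) [_]; rewrite !tprodE => e1; move: hd.
    have : x i0 * det2 x y = 0.
      transitivity (x i0 * x i0 * y i1 - x i0 * x i1 * y i0); first by rewrite /det2; ring.
      by rewrite e1 subrr.
    by move/eqP; rewrite mulf_eq0 (negPf hx0) /= => ->.
  + move/Xsym3_sym => /(_ i0 i1 i0) [e1 _]; rewrite !tprodE in e1; move: hd.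
    have : x i0 * det2 x y = 0.
      transitivity (x i0 * y i1 * x i0 - x i1 * y i0 * x i0); first by rewrite /det2; ring.
      by rewrite e1 subrr.
    by move/eqP; rewrite mulf_eq0 (negPf hx0) /= => ->.
  + move/Xsym3_sym => /(_ i1 i0 i0) [e1 _]; rewrite !tprodE in e1; move: hd.
    have : x i0 * det2 x y = 0.
      transitivity (y i1 * x i0 * x i0 - y i0 * x i1 * x i0); first by rewrite /det2; ring.
      by rewrite e1 subrr.
    by move/eqP; rewrite mulf_eq0 (negPf hx0) /= => ->.
- move=> w; rewrite hcr crit21E hAB' -/x.
  have -> : Z21 t x = tprod x x y by [].
  by split => [[[h|h]|h]|[h|[h|h]]]; tauto.
- move=> ht; have [sg [hsg [sA sB]]] := hre ht.
  have s2 : singular_value t (tprod x y x) sg by case: hz2AB => ->.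
  have s3 : singular_value t (tprod y x x) sg by case: hz3AB => ->.
  exists sg; split => //; split => //.
  exact: sv_perm23.
Qed.
End P7.

Section P8.
Variable R : realType.
Local Notation C := (R[i]).
Local Notation vec := (vec R).
Local Notation tensor := (tensor R).
Local Notation MP := (mpoly.mpoly 8 C).

Definition idx (i j k : 'I_2) : 'I_8 := inord (4 * i + 2 * j + k).
Definition TX : 'I_2 -> 'I_2 -> 'I_2 -> MP := fun i j k => @mpoly.mpolyX 8 C (mpoly.mnm1 (idx i j k)).

Lemma coords_idx (t : tensor) i j k : coords t (idx i j k) = t (i, j, k).
Proof.
by rewrite /coords /idx; case: (ord2P i) => ->; case: (ord2P j) => ->; case: (ord2P k) => ->;
  congr (t (_, _, _)); apply: val_inj; rewrite /= ?inordK.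
Qed.

Lemma meval_TX (t : tensor) : (fun i j k => mpoly.meval (coords t) (TX i j k)) = tt t.
Proof.
apply: functional_extensionality => i; apply: functional_extensionality => j;
apply: functional_extensionality => k.
by rewrite /TX mpoly.mevalXU coords_idx.
Qed.

Lemma size_deriv_le (A : nzRingType) (p : {poly A}) n : (size p <= n.+1)%N -> (size p^`() <= n)%N.
Proof.
move=> h; apply/leq_sizeP => j hj; rewrite coef_deriv.
by rewrite (leq_sizeP _ _ h) ?mul0rn.
Qed.

Lemma size_pIg (A : comNzRingType) : (size (pIg A) <= 3)%N.
Proof. by rewrite /pIg (leq_trans (size_polyD _ _)) // geq_max size_polyXn size_poly1. Qed.

Lemma pIg_coef2 (A : comNzRingType) : (pIg A)`_2 = 1.
Proof. by rewrite /pIg coefD coefC coefXn /= add0r. Qed.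

Definition F1 : MP := (pPg TX)`_4.
Definition F2 : MP := resultant (pPg TX) (pPg TX)^`().
Definition F3 : MP := resultant (pPg TX) (pIg _).
Definition F4 : MP := resultant (pPg TX) (pVg TX).
Definition F5 : MP := (pVg TX)`_2.
Definition F6 : MP := ksg TX.
Definition F7 : MP := sg TX.
Definition F8 : MP := (pQg TX)`_2.
Definition F9 : MP := (pEg TX)`_2.
Definition F10 : MP := resultant (pQg TX) (pIg _).
Definition F11 : MP := resultant (pQg TX) (pEg TX).
Definition f1 : MP := F1 * F2 * F3 * F4 * F5 * F6 * F7 * F8 * F9 * F10 * F11.
Definition f2 : MP := f1 * Lg TX i1 * Cwg TX.

Section Eval.
Variable t : tensor.
Local Notation ph := (mpoly.meval (coords t)).
Local Notation T := (tt t).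

Lemma mapP_ : map_poly ph (pPg TX) = pPg T.
Proof. by rewrite pPg_morph meval_TX. Qed.
Lemma mapQ_ : map_poly ph (pQg TX) = pQg T.
Proof. by rewrite pQg_morph meval_TX. Qed.
Lemma mapV_ : map_poly ph (pVg TX) = pVg T.
Proof. by rewrite pVg_morph meval_TX. Qed.
Lemma mapE_ : map_poly ph (pEg TX) = pEg T.
Proof. by rewrite pEg_morph meval_TX. Qed.
Lemma mapI_ : map_poly ph (pIg _) = pIg C.
Proof. exact: pIg_morph. Qed.

Lemma eF1 : ph F1 = (pPg T)`_4. Proof. by rewrite /F1 -coef_map mapP_. Qed.
Lemma eF5 : ph F5 = (pVg T)`_2. Proof. by rewrite /F5 -coef_map mapV_. Qed.
Lemma eF6 : ph F6 = ksv t. Proof. by rewrite /F6 ksg_morph meval_TX. Qed.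
Lemma eF7 : ph F7 = sv t. Proof. by rewrite /F7 sg_morph meval_TX. Qed.
Lemma eF8 : ph F8 = (pQg T)`_2. Proof. by rewrite /F8 -coef_map mapQ_. Qed.
Lemma eF9 : ph F9 = (pEg T)`_2. Proof. by rewrite /F9 -coef_map mapE_. Qed.
Lemma eL1 : ph (Lg TX i1) = Lg T i1. Proof. by rewrite Lg_morph meval_TX. Qed.
Lemma eCw : ph (Cwg TX) = Cwg T. Proof. by rewrite Cwg_morph meval_TX. Qed.

Hypothesis h1 : (pPg T)`_4 != 0.
Hypothesis h5 : (pVg T)`_2 != 0.
Hypothesis h8 : (pQg T)`_2 != 0.
Hypothesis h9 : (pEg T)`_2 != 0.

Lemma lP : ph (lead_coef (pPg TX)) != 0.
Proof. by apply: (f_lead (size_pPg _)); change (ph F1 != 0); rewrite eF1. Qed.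
Lemma lPd : ph (lead_coef (pPg TX)^`()) != 0.
Proof.
apply: (f_lead (n := 3) (size_deriv_le (size_pPg _))).
rewrite coef_deriv rmorphMn; change (ph F1 *+ 4 != 0).
by rewrite eF1 mulrn_eq0 negb_or h1.
Qed.
Lemma lV : ph (lead_coef (pVg TX)) != 0.
Proof. by apply: (f_lead (size_pVg _)); change (ph F5 != 0); rewrite eF5. Qed.
Lemma lQ : ph (lead_coef (pQg TX)) != 0.
Proof. by apply: (f_lead (size_pQg _)); change (ph F8 != 0); rewrite eF8. Qed.
Lemma lE : ph (lead_coef (pEg TX)) != 0.
Proof. by apply: (f_lead (size_pEg _)); change (ph F9 != 0); rewrite eF9. Qed.
Lemma lI : ph (lead_coef (pIg MP)) != 0.
Proof. by apply: (f_lead (size_pIg _)); rewrite pIg_coef2 rmorph1 oner_neq0. Qed.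

Lemma eF2 : ph F2 = resultant (pPg T) (pPg T)^`().
Proof. by rewrite /F2 (map_resultant_gen lP lPd) -deriv_map mapP_. Qed.
Lemma eF3 : ph F3 = resultant (pPg T) (pIg C).
Proof. by rewrite /F3 (map_resultant_gen lP lI) mapP_ mapI_. Qed.
Lemma eF4 : ph F4 = resultant (pPg T) (pVg T).
Proof. by rewrite /F4 (map_resultant_gen lP lV) mapP_ mapV_. Qed.
Lemma eF10 : ph F10 = resultant (pQg T) (pIg C).
Proof. by rewrite /F10 (map_resultant_gen lQ lI) mapQ_ mapI_. Qed.
Lemma eF11 : ph F11 = resultant (pQg T) (pEg T).
Proof. by rewrite /F11 (map_resultant_gen lQ lE) mapQ_ mapE_. Qed.
End Eval.

Lemma f1_nz (t : tensor) : mpoly.meval (coords t) f1 != 0 ->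
  [/\ [/\ (pPg (tt t))`_4 != 0, resultant (pPg (tt t)) (pPg (tt t))^`() != 0,
      resultant (pPg (tt t)) (pIg C) != 0 & resultant (pPg (tt t)) (pVg (tt t)) != 0],
      [/\ (pVg (tt t))`_2 != 0, ksv t != 0 & sv t != 0] &
      [/\ (pQg (tt t))`_2 != 0, (pEg (tt t))`_2 != 0,
          resultant (pQg (tt t)) (pIg C) != 0 & resultant (pQg (tt t)) (pEg (tt t)) != 0]].
Proof.
rewrite /f1 !rmorphM /= !mulf_eq0 !negb_or.
move=> /andP[/andP[/andP[/andP[/andP[/andP[/andP[/andP[/andP[/andP[n1 n2] n3] n4] n5] n6] n7] n8] n9] n10] n11].
rewrite eF1 in n1; rewrite eF5 in n5; rewrite eF8 in n8; rewrite eF9 in n9.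
rewrite eF6 in n6; rewrite eF7 in n7.
rewrite eF2 // in n2; rewrite eF3 // in n3; rewrite eF4 // in n4.
rewrite eF10 // in n10; rewrite eF11 // in n11.
Qed.

Lemma f1_of (t : tensor) :
  [/\ [/\ (pPg (tt t))`_4 != 0, resultant (pPg (tt t)) (pPg (tt t))^`() != 0,
      resultant (pPg (tt t)) (pIg C) != 0 & resultant (pPg (tt t)) (pVg (tt t)) != 0],
      [/\ (pVg (tt t))`_2 != 0, ksv t != 0 & sv t != 0] &
      [/\ (pQg (tt t))`_2 != 0, (pEg (tt t))`_2 != 0,
          resultant (pQg (tt t)) (pIg C) != 0 & resultant (pQg (tt t)) (pEg (tt t)) != 0]] ->
  mpoly.meval (coords t) f1 != 0.
Proof.
move=> [[n1 n2 n3 n4] [n5 n6 n7] [n8 n9 n10 n11]].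
rewrite /f1 !rmorphM /= eF1 eF5 eF6 eF7 eF8 eF9 eF2 // eF3 // eF4 // eF10 // eF11 //.
by rewrite !mulf_neq0.
Qed.
End P8.

Section P9.
Variable R : realType.
Local Notation C := (R[i]).
Local Notation vec := (vec R).
Local Notation tensor := (tensor R).

Definition t0 : tensor := [ffun p => match (nat_of_ord p.1.1 + nat_of_ord p.1.2 + nat_of_ord p.2)%N with
  | 0 => -1 | 1 => 2 | 2 => -1 | _ => 2 end].

Lemma t0_S3 : S3 t0.
Proof.
move=> i j k; rewrite !ffunE /=.
by case: (ord2P i) => ->; case: (ord2P j) => ->; case: (ord2P k) => ->.
Qed.

Local Notation T0 := (tt t0).

Ltac ev0 := rewrite /sv /ksv /sg /ksg /Mg /wsg /Lg ?sum2 /perp /m2 /tt /t0 !ffunE /= ?sum2 /=.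

Lemma nzE (e v : C) : e = v -> v != 0 -> e != 0.
Proof. by move=> ->. Qed.

Ltac fnum := field; rewrite ?pnatr_eq0 //.
Ltac nnum := rewrite ?oppr_eq0; try (apply: mulf_neq0); rewrite ?oppr_eq0 ?invr_eq0 ?pnatr_eq0 ?oner_eq0 //.

Lemma t0_P4 : (pPg T0)`_4 = 4.
Proof. rewrite pPg_coef4 /Pform; ev0; ring. Qed.

Lemma t0_Peval r : (pPg T0).[r] = 2 * ((r + 1) * (r - 1) * (r - 2) * (2 * r - 1)).
Proof. rewrite pPg_eval /Pform; ev0; ring. Qed.

Lemma t0_Veval r : (pVg T0).[r] = -1 + 4 * r - r ^+ 2.
Proof. rewrite pVg_eval /Vform; ev0; ring. Qed.

Lemma t0_V2 : (pVg T0)`_2 = -1.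
Proof. rewrite pVg_coef2; ev0; done. Qed.

Lemma t0_ks : ksv t0 = 20.
Proof. ev0; ring. Qed.

Lemma t0_s : sv t0 = 36.
Proof. ev0; ring. Qed.

Lemma t0_Q2 : (pQg T0)`_2 = 48.
Proof. rewrite pQg_coef2 /Qform; ev0; ring. Qed.

Lemma t0_Qeval r : (pQg T0).[r] = 24 * ((2 * r - 1) * (r - 2)).
Proof. rewrite pQg_eval /Qform; ev0; ring. Qed.

Lemma t0_E2 : (pEg T0)`_2 = 6.
Proof. rewrite pEg_coef2; ev0; ring. Qed.

Lemma t0_Eeval r : (pEg T0).[r] = 6 * r ^+ 2 - 6.
Proof. rewrite pEg_eval /Eform; ev0; ring. Qed.

Lemma t0_L1 : Lg T0 i1 = 4.
Proof. ev0; ring. Qed.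

Lemma t0_Cw : Cwg T0 = -72.
Proof. rewrite /Cwg; ev0; ring. Qed.

Lemma res_deriv_ne0 (F : closedFieldType) (p : {poly F}) (l : seq F) :
  uniq l -> size p = (size l).+1 -> (forall r, r \in l -> root p r) -> resultant p p^`() != 0.
Proof.
move=> ul sp hr.
have p0 : p != 0 by rewrite -size_poly_eq0 sp.
have [rs e] := closed_field_poly_normal p.
have l0 : lead_coef p != 0 by rewrite lead_coef_eq0.
have srs : size rs = size l.
  by move: sp; rewrite {1}e size_scale // size_prod_XsubC => -[].
have sub : {subset l <= rs}.
  by move=> r /hr; rewrite {1}e rootZ // root_prod_XsubC.
have urs : uniq rs by apply: (leq_size_uniq ul sub); rewrite srs.
have sep : separable_poly p.
  rewrite (eqp_separable (q := \prod_(z <- rs) ('X - z%:P))); first by rewrite separable_prod_XsubC.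
  by rewrite {1}e eqp_scale.
move: sep; rewrite unlock /coprimep => /eqP h.
by rewrite resultant_eq0 h.
Qed.

Lemma neqE (a b v : C) : a - b = v -> v != 0 -> a != b.
Proof. by move=> h hv; apply: contraNneq hv => e; rewrite -h e subrr. Qed.

Lemma two : (2 : C) != 0. Proof. by rewrite pnatr_eq0. Qed.

Lemma half_eq (r : C) : 2 * r - 1 == 0 -> r = 2^-1.
Proof.
rewrite subr_eq0 => /eqP h.
by rewrite -[r](mulKf two) h mulr1.
Qed.

Lemma roots4 r : (pPg T0).[r] = 0 -> [\/ r = -1, r = 1, r = 2 | r = 2^-1].
Proof.
rewrite t0_Peval => /eqP; rewrite mulf_eq0 (negPf two) /= !mulf_eq0 -!orbA.
move=> /or4P [h|h|h|h].
- by apply: Or41; apply/eqP; rewrite -addr_eq0.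
- by apply: Or42; apply/eqP; rewrite -subr_eq0.
- by apply: Or43; apply/eqP; rewrite -subr_eq0.
- by apply: Or44; apply: half_eq.
Qed.

Lemma roots2 r : (pQg T0).[r] = 0 -> r = 2^-1 \/ r = 2.
Proof.
rewrite t0_Qeval => /eqP; rewrite mulf_eq0 pnatr_eq0 /= mulf_eq0.
move=> /orP [h|h]; [left; exact: half_eq | right; apply/eqP; rewrite -subr_eq0 //].
Qed.

Lemma t0_G :
  [/\ [/\ (pPg T0)`_4 != 0, resultant (pPg T0) (pPg T0)^`() != 0,
      resultant (pPg T0) (pIg C) != 0 & resultant (pPg T0) (pVg T0) != 0],
      [/\ (pVg T0)`_2 != 0, ksv t0 != 0 & sv t0 != 0] &
      [/\ (pQg T0)`_2 != 0, (pEg T0)`_2 != 0,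
          resultant (pQg T0) (pIg C) != 0 & resultant (pQg T0) (pEg T0) != 0]].
Proof.
split; split.
- by rewrite t0_P4 pnatr_eq0.
- apply: (res_deriv_ne0 (l := [:: -1; 1; 2; 2^-1])).
  + rewrite /= !inE !negb_or !andbT; apply/and3P; split; [apply/and3P; split| apply/andP; split|].
    * by apply: (neqE (v := -2)); [ring | nnum].
    * by apply: (neqE (v := -3)); [ring | nnum].
    * apply: (neqE (v := -3 / 2)); [fnum|]; nnum.
    * by apply: (neqE (v := -1)); [ring | nnum].
    * apply: (neqE (v := 2^-1)); [fnum|]; nnum.
    * apply: (neqE (v := 3 / 2)); [fnum|]; nnum.
  + have h4 : (pPg T0)`_4 != 0 by rewrite t0_P4 pnatr_eq0.
    by have [_ ->] := lead_of_coef (size_pPg _) h4.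
  + move=> r; rewrite !inE => /or4P [/eqP->|/eqP->|/eqP->|/eqP->]; apply/rootP; rewrite t0_Peval;
      field; rewrite ?pnatr_eq0 //.
- apply: res_ne0 => r /rootP /roots4 [->|->|->|->]; rewrite /root pIg_eval.
  + by apply: (nzE (v := 2)); [ring | nnum].
  + by apply: (nzE (v := 2)); [ring | nnum].
  + by apply: (nzE (v := 5)); [ring | nnum].
  + apply: (nzE (v := 5 / 4)); [fnum|]; nnum.
- apply: res_ne0 => r /rootP /roots4 [->|->|->|->]; rewrite /root t0_Veval.
  + by apply: (nzE (v := -6)); [ring | nnum].
  + by apply: (nzE (v := 2)); [ring | nnum].
  + by apply: (nzE (v := 3)); [ring | nnum].
  + apply: (nzE (v := 3 / 4)); [fnum|]; nnum.
- by rewrite t0_V2 oppr_eq0 oner_neq0.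
- by rewrite t0_ks pnatr_eq0.
- by rewrite t0_s pnatr_eq0.
- by rewrite t0_Q2 pnatr_eq0.
- by rewrite t0_E2 pnatr_eq0.
- apply: res_ne0 => r /rootP /roots2 [->|->]; rewrite /root pIg_eval.
  + apply: (nzE (v := 5 / 4)); [fnum|]; nnum.
  + by apply: (nzE (v := 5)); [ring | nnum].
- apply: res_ne0 => r /rootP /roots2 [->|->]; rewrite /root t0_Eeval.
  + apply: (nzE (v := - (9 / 2))); [fnum|]; nnum.
  + by apply: (nzE (v := 18)); [ring | nnum].
Qed.
End P9.

Theorem proposition6p1 (R : realType) :
  (* (1) mu = (2,1) *)
  general_in (@S21 R) (fun t =>
    exists s : seq (tensor R),
      [/\ uniq s, size s = 4%N &
          forall z, critical (@X21 R) (@T21 R) t z <-> z \in s] /\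
      exists x y z : vec R,
        let z1 := tprod x y z in let z2 := tprod y x z in
        [/\ z1 != z2, ~ X21 z1, ~ X21 z2,
            (forall w, critical (@X3 R) (@T3 R) t w <->
                         w \in s \/ w = z1 \/ w = z2) &
            (real_tensor t ->
               exists sigma : R[i], sigma \is Num.real /\
                 singular_value t z1 sigma /\ singular_value t z2 sigma)])
  /\
  (* (2) mu = (3) *)
  general_in (@S3 R) (fun t =>
    exists s : seq (tensor R),
      [/\ uniq s, size s = 3%N &
          forall z, critical (@Xsym3 R) (@Tsym3 R) t z <-> z \in s] /\
      exists x y : vec R,
        let z1 := tprod x x y in let z2 := tprod x y x in let z3 := tprod y x x in
        [/\ uniq [:: z1; z2; z3], ~ Xsym3 z1 /\ ~ Xsym3 z2 /\ ~ Xsym3 z3,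
            (forall w, critical (@X3 R) (@T3 R) t w <->
                         w \in s \/ w = z1 \/ w = z2 \/ w = z3) &
            (real_tensor t ->
               exists sigma : R[i], sigma \is Num.real /\
                 [/\ singular_value t z1 sigma, singular_value t z2 sigma &
                     singular_value t z3 sigma])]).
Proof.
have hf1 : mpoly.meval (coords (@t0 R)) (@f1 R) != 0 by apply: f1_of; exact: t0_G.
split.
- exists (@f1 R); split.
  + by exists (@t0 R); split; first exact: (S3_S21 (@t0_S3 R)).
  + move=> t hS hf.
    have [[n1 n2 n3 n4] [n5 n6 n7] [n8 n9 n10 n11]] := f1_nz hf.
    exact: (part1_main hS n1 n2 n3 n4 n5 n6 n7 n8 n9 n10 n11).
- exists (@f2 R); split.
  + exists (@t0 R); split; first exact: t0_S3.
    rewrite /f2 2!rmorphM /= !mulf_neq0 //.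
    * by rewrite eL1 t0_L1 pnatr_eq0.
    * by rewrite eCw t0_Cw oppr_eq0 pnatr_eq0.
  + move=> t hS3 hf; move: hf; rewrite /f2 2!rmorphM /= !mulf_eq0 !negb_or => /andP[/andP[hf hL] hC].
    rewrite eL1 in hL; rewrite eCw in hC.
    have hS := S3_S21 hS3.
    have [[n1 n2 n3 n4] [n5 n6 n7] [n8 n9 n10 n11]] := f1_nz hf.
    exact: (part2_main hS n1 n2 n3 n4 n5 n6 n7 n8 n9 n10 n11 hS3 hL hC).
Qed.
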